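(* There exists a PBD$(v,\{3,4\})$ of dimension three for every $v \in \{58,66,67,76\}$.
   Context: For a positive integer $v$ and $K \subseteq \{2,3,4,\dots\}$, a pairwise balanced design PBD$(v,K)$ is a pair $(X,\mathcal{B})$ where $X$ is a $v$-set of points and $\mathcal{B}$ is a family of subsets of $X$ (blocks), each of size in $K$, such that any two distinct points of $X$ lie together in exactly one block. A flat (subdesign) is a pair $(Y,\mathcal{B}_Y)$ with $Y \subseteq X$ and $\mathcal{B}_Y = \{B \in \mathcal{B} : B \subseteq Y\}$ such that any two distinct points of $Y$ lie together in exactly one block of $\mathcal{B}_Y$; it is proper if $Y \ne X$. The dimension of the PBD is the maximum integer $d$ such that every set of $d$ points is contained in a proper flat. *)

(* Defs.v *)
From mathcomp Require Import all_boot.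
Set Implicit Arguments.
Unset Strict Implicit.
Unset Printing Implicit Defensive.

Definition blocks_in (T : finType) (B : {set {set T}}) (K : pred nat) : Prop :=
  forall b, b \in B -> K #|b|.

Definition pairwise_balanced_on (T : finType) (B : {set {set T}}) (Y : {set T}) : Prop :=
  forall x y, x \in Y -> y \in Y -> x != y ->
    #|[set b in B | (b \subset Y) && (x \in b) && (y \in b)]| = 1.

(* PBD(v,K) on point set T (v = #|T|). *)
Definition is_PBD (T : finType) (K : pred nat) (B : {set {set T}}) : Prop :=
  blocks_in B K /\ pairwise_balanced_on B [set: T].

Definition is_flat (T : finType) (B : {set {set T}}) (Y : {set T}) : Prop :=
  pairwise_balanced_on B Y.

Definition is_proper_flat (T : finType) (B : {set {set T}}) (Y : {set T}) : Prop :=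
  is_flat B Y /\ Y != [set: T].

Definition every_dset_in_proper_flat (T : finType) (B : {set {set T}}) (d : nat) : Prop :=
  forall S : {set T}, #|S| = d -> exists Y, is_proper_flat B Y /\ S \subset Y.

(* The dimension of the design is d: the maximum d (among d <= v, since for
   d > v the condition holds vacuously) such that every d-set of points lies
   in a proper flat. *)
Definition has_dimension (T : finType) (B : {set {set T}}) (d : nat) : Prop :=
  every_dset_in_proper_flat B d /\
  forall d', d' <= #|T| -> every_dset_in_proper_flat B d' -> d' <= d.

Definition K34 : pred nat := fun k => (k == 3) || (k == 4).

(* Main.v *)
Require Import Defs.
From mathcomp Require Import all_boot.
Set Implicit Arguments.
Unset Strict Implicit.
Unset Printing Implicit Defensive.

Section Gen.
Variable v : nat.
Variable bl : seq (seq nat).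

Definition setof (b : seq nat) : {set 'I_v} := [set i : 'I_v | val i \in b].

Lemma in_setof b (i : 'I_v) : (i \in setof b) = (val i \in b).
Proof. by rewrite inE. Qed.

Definition Bof : {set {set 'I_v}} := locked [set X : {set 'I_v} | has (fun b => X == setof b) bl].

Lemma in_Bof X : reflect (exists2 b, b \in bl & X = setof b) (X \in Bof).
Proof.
rewrite /Bof -lock inE; apply: (iffP hasP) => [[b hb /eqP ->]|[b hb ->]]; by exists b.
Qed.

Lemma card_setof b : uniq b -> all (fun x => x < v) b -> #|setof b| = size b.
Proof.
move=> ub ab.
have -> : setof b = [set i in pmap insub b].
  by apply/setP => i; rewrite !inE mem_pmap_sub.
rewrite cardsE (card_uniqP _) ?pmap_sub_uniq // size_pmap_sub.
by rewrite (eq_in_count (a2 := predT)) ?count_predT // => x; move/(allP ab).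
Qed.

Definition ok_blocks :=
  all (fun b => [&& uniq b, all (fun x => x < v) b & (size b == 3) || (size b == 4)]) bl.

Definition nbh (x : nat) : seq nat :=
  flatten [seq rem x b | b <- filter (fun b : seq nat => x \in b) bl].

Definition ok_pairs :=
  all (fun x => let N := nbh x in
     uniq N && all (fun y => (x == y) || (y \in N)) (iota 0 v)) (iota 0 v).

Definition bvof (s : seq nat) : seq bool := [seq (z \in s) | z <- iota 0 v].

Definition setbv (f : seq bool) : {set 'I_v} := [set i : 'I_v | nth false f i].

Definition ok_flat (f : seq bool) :=
  all (fun b => (count (nth false f) b <= 1) || all (nth false f) b) bl.

Definition ok_proper (f : seq bool) := has (fun x => ~~ nth false f x) (iota 0 v).

Fixpoint orv (f g : seq bool) : seq bool :=
  match f, g with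
  | a :: f', b :: g' => (a || b) :: orv f' g'
  | [::], _ => g
  | _, [::] => f
  end.

Definition ok_flats (fb : seq (seq bool)) := all (fun f => ok_flat f && ok_proper f) fb.

Definition ok_triples (fb : seq (seq bool)) :=
  all (fun x =>
    let Fx := filter (fun f => nth false f x) fb in
    all (fun y => (x == y) ||
     let U := foldr orv [::] (filter (fun f => nth false f y) Fx) in
     all (nth false U) (iota 0 v)) (iota 0 v)) (iota 0 v).

Definition stepb (c : seq bool) : seq bool :=
  let sel := filter (fun b : seq nat => 2 <= count (nth false c) b) bl in
  [seq nth false c z || has (fun b : seq nat => z \in b) sel | z <- iota 0 v].

Definition ok_gen (s0 : seq nat) (k : nat) :=
  [&& uniq s0, size s0 == 4, all (fun x => x < v) s0 &
      all (nth false (iter k stepb (bvof s0))) (iota 0 v)].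

Definition check (fl : seq (seq nat)) (s0 : seq nat) (k : nat) :=
  [&& ok_blocks, ok_pairs, (let fb := map bvof fl in ok_flats fb && ok_triples fb) & ok_gen s0 k].

Lemma two_le_count (s : seq nat) (P : pred nat) x y : x != y -> x \in s -> y \in s -> P x -> P y ->
  2 <= count P s.
Proof.
move=> nxy xs ys xt yt.
rewrite -size_filter.
have -> : 2 = size [:: x; y] by [].
apply: uniq_leq_size; first by rewrite /= inE nxy.
move=> z; rewrite !inE => /orP[] /eqP ->; rewrite mem_filter; apply/andP; by split.
Qed.

Lemma count_two (s : seq nat) (P : pred nat) : uniq s -> 2 <= count P s ->
  exists x y, [/\ x != y, x \in s, y \in s, P x & P y].
Proof.
move=> us; rewrite -size_filter.
have uf : uniq (filter P s) by rewrite filter_uniq.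
have sub : forall z, z \in filter P s -> (z \in s) && P z.
  by move=> z; rewrite mem_filter andbC.
move: uf sub; case: (filter _ s) => [|x [|y r]] //= /andP[nx _] sub _.
exists x, y; move: nx; rewrite inE negb_or => /andP[nxy _].
have /andP[xs xt] := sub x (mem_head _ _).
have /andP[ys yt] : (y \in s) && P y by apply: sub; rewrite !inE eqxx orbT.
by split.
Qed.

Lemma flat_uniq2 (T S : eqType) (f : T -> seq S) s a b y :
  uniq (flatten (map f s)) -> a \in s -> b \in s -> a != b -> y \in f a -> y \in f b -> False.
Proof.
elim: s => //= c s IH; rewrite cat_uniq => /and3P[uc hc us].
have inF : forall d, d \in s -> y \in f d -> has (mem (f c)) (flatten (map f s)) = false -> y \in f c -> False.
  move=> d ds yd h yc; move/negbT/negP: h; apply; apply/hasP; exists y => //.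
  by apply/flattenP; exists (f d) => //; apply: map_f.
rewrite !inE => /orP[/eqP ea|as'] /orP[/eqP eb|bs'] nab ya yb.
- by rewrite ea eb eqxx in nab.
- by apply: (inF b bs' yb (negbTE hc)); rewrite -ea.
- by apply: (inF a as' ya (negbTE hc)); rewrite -eb.
- exact: (IH us as' bs' nab ya yb).
Qed.

Lemma nth_orv f g z : nth false (orv f g) z = nth false f z || nth false g z.
Proof.
elim: f g z => [|a f IH] [|b g] [|z] //=; by rewrite ?orbF.
Qed.

Lemma nth_foldr_orv F z : nth false (foldr orv [::] F) z = has (fun f => nth false f z) F.
Proof. elim: F => [|f F IH] /=; first by rewrite nth_nil. by rewrite nth_orv IH. Qed.

Lemma nth_bvof s z : z < v -> nth false (bvof s) z = (z \in s).
Proof. by move=> zv; rewrite (nth_map 0) ?size_iota // nth_iota. Qed.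

Lemma in_setbv f (i : 'I_v) : (i \in setbv f) = nth false f i.
Proof. by rewrite inE. Qed.

Hypothesis Hb : ok_blocks.
Hypothesis Hp : ok_pairs.

Lemma blk_ok b : b \in bl -> [/\ uniq b, all (fun x => x < v) b & (size b == 3) || (size b == 4)].
Proof. by move=> hb; have /and3P[] := allP Hb b hb. Qed.

Lemma pairs_at x : x < v -> uniq (nbh x) /\ forall y, y < v -> x != y -> y \in nbh x.
Proof.
move=> xv; have := allP Hp x; rewrite mem_iota add0n /= => /(_ xv) /andP[u a]; split => // y yv nxy.
have := allP a y; rewrite mem_iota add0n /= => /(_ yv); by rewrite (negbTE nxy).
Qed.

Lemma uniqB (X1 X2 : {set 'I_v}) (x y : 'I_v) : X1 \in Bof -> X2 \in Bof -> x != y ->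
  x \in X1 -> y \in X1 -> x \in X2 -> y \in X2 -> X1 = X2.
Proof.
move=> /in_Bof[b1 hb1 ->] /in_Bof[b2 hb2 ->] nxy; rewrite !in_setof => x1 y1 x2 y2.
case: (eqVneq b1 b2) => [-> //|n12].
have [u _] := pairs_at (ltn_ord x).
have [ub1 _ _] := blk_ok hb1; have [ub2 _ _] := blk_ok hb2.
have nyx : val y != val x by rewrite eq_sym.
exfalso; apply: (flat_uniq2 (f := rem (val x)) (s := filter (fun b : seq nat => val x \in b) bl) (y := val y) u _ _ n12).
- by rewrite mem_filter x1 hb1.
- by rewrite mem_filter x2 hb2.
- by rewrite (mem_rem_uniq _ ub1) inE nyx.
- by rewrite (mem_rem_uniq _ ub2) inE nyx.
Qed.

Lemma existB (x y : 'I_v) : x != y -> exists2 b, b \in bl & (val x \in b) && (val y \in b).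
Proof.
move=> nxy.
have [_ /(_ (val y) (ltn_ord y) nxy)] := pairs_at (ltn_ord x).
move=> /flattenP[r /mapP[b]]; rewrite mem_filter => /andP[xb hb] -> yr.
by exists b => //; rewrite xb (mem_rem yr).
Qed.

Lemma pbal_of (Y : {set 'I_v}) :
  (forall b, b \in bl -> (exists x y : 'I_v, [/\ x != y, val x \in b, val y \in b, x \in Y & y \in Y]) -> setof b \subset Y) ->
  pairwise_balanced_on Bof Y.
Proof.
move=> HY x y xY yY nxy.
have [b hb /andP[xb yb]] := existB nxy.
have sub : setof b \subset Y by apply: HY => //; exists x, y.
have XB : setof b \in Bof by apply/in_Bof; exists b.
apply/eqP/cards1P; exists (setof b); apply/setP => X; rewrite !inE.
apply/idP/idP.
  move=> /and3P[XB' /andP[_ xX] yX]; apply/eqP.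
  by apply: (uniqB XB' XB nxy) => //; rewrite in_setof.
move/eqP => ->; by rewrite XB sub !in_setof xb yb.
Qed.

Lemma is_PBD_Bof : is_PBD K34 Bof.
Proof.
split.
  move=> X /in_Bof[b hb ->]; have [ub ab sz] := blk_ok hb.
  by rewrite /K34 card_setof.
by apply: pbal_of => b _ _; apply: subsetT.
Qed.

Lemma flat_sub (Y : {set 'I_v}) b (x y : 'I_v) : is_flat Bof Y -> b \in bl -> x != y ->
  val x \in b -> val y \in b -> x \in Y -> y \in Y -> setof b \subset Y.
Proof.
move=> fY hb nxy xb yb xY yY.
have := fY x y xY yY nxy.
move/eqP/cards1P => [X0 hX0].
have : X0 \in [set X in Bof | (X \subset Y) && (x \in X) && (y \in X)] by rewrite hX0 set11.
rewrite !inE => /and3P[X0B /andP[sX0 xX0] yX0].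
have XB : setof b \in Bof by apply/in_Bof; exists b.
by rewrite (uniqB XB X0B nxy) // in_setof.
Qed.

Lemma flat_of (f : seq bool) : ok_flat f -> is_flat Bof (setbv f).
Proof.
move=> fY; apply: pbal_of => b hb [x [y [nxy xb yb xY yY]]].
have /orP[|allY] := allP fY b hb.
  rewrite leqNgt => /negP; case; apply: (@two_le_count _ _ (val x) (val y)) => //;
  by rewrite -in_setbv.
apply/subsetP => i; rewrite in_setof in_setbv => ib; exact: (allP allY).
Qed.

Lemma proper_of (f : seq bool) : ok_proper f -> setbv f != [set: 'I_v].
Proof.
move=> /hasP[x]; rewrite mem_iota add0n /= => xv xY.
apply/negP => /eqP h.
have : Ordinal xv \in setbv f by rewrite h inE.
by rewrite in_setbv /= (negbTE xY).
Qed.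

Lemma extend (A : {set 'I_v}) n : #|A| <= n <= v -> exists S : {set 'I_v}, A \subset S /\ #|S| = n.
Proof.
elim: n => [|n IH].
  rewrite leqn0 => /andP[/eqP A0 _]; exists A; by rewrite A0.
move=> /andP[An nv].
rewrite leq_eqVlt in An; case/orP: An => [/eqP <-|An]; first by exists A.
have [S [AS Sn]] : exists S : {set 'I_v}, A \subset S /\ #|S| = n.
  by apply: IH; rewrite -ltnS An ltnW.
have : S != setT.
  by apply/negP => /eqP ST; move: Sn nv; rewrite ST cardsT card_ord => ->; rewrite ltnn.
rewrite -properT => /properP[_ [x _ xS]]; exists (x |: S); split.
  by apply: subset_trans AS (subsetUr _ _).
by rewrite cardsU1 xS Sn.
Qed.

Lemma closure (Y : {set 'I_v}) (fY : is_flat Bof Y) k c :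
 (forall i : 'I_v, nth false c i -> i \in Y) -> forall i : 'I_v, nth false (iter k stepb c) i -> i \in Y.
Proof.
move=> H0; elim: k => [|k IH] //= i.
rewrite /stepb (nth_map 0) ?size_iota ?ltn_ord // nth_iota ?ltn_ord // add0n.
move=> /orP[/IH //|/hasP[b]]; rewrite mem_filter => /andP[cnt hb] ib.
have [ub ab _] := blk_ok hb.
have [x [y [nxy xb yb xc yc]]] := count_two ub cnt.
have xv : x < v := allP ab x xb.
have yv : y < v := allP ab y yb.
have sub := @flat_sub Y b (Ordinal xv) (Ordinal yv) fY hb nxy xb yb (IH (Ordinal xv) xc) (IH (Ordinal yv) yc).
by move/subsetP: sub; apply; rewrite in_setof.
Qed.

Lemma dim3 fb s0 k : ok_flats fb -> ok_triples fb -> ok_gen s0 k -> has_dimension Bof 3.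
Proof.
rewrite /ok_gen => Hf Ht /and4P[us0 sz0 as0 gen]; split.
  move=> S; move: (enum_uniq S) (mem_enum S); rewrite cardE.
  case: (enum S) => [|x [|y [|z [|w r]]]] //= uS mS _.
  move: uS; rewrite !inE !negb_or => /and3P[/andP[nxy nxz] nyz _].
  have := allP Ht (val x); rewrite mem_iota add0n ltn_ord => /(_ isT) /allP /(_ (val y)).
  rewrite mem_iota add0n ltn_ord => /(_ isT) /orP[/eqP h|].
    by case/negP: nxy; apply/eqP/val_inj.
  move=> /allP /(_ (val z)); rewrite mem_iota add0n ltn_ord => /(_ isT).
  rewrite nth_foldr_orv => /hasP[f]; rewrite !mem_filter => /andP[yf /andP[xf hf]] zf.
  exists (setbv f); split.
    have /andP[fl p] := allP Hf f hf.
    by split; [apply: flat_of | apply: proper_of].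
  apply/subsetP => i; rewrite -mS !inE => /or3P[] /eqP -> //.
move=> d dv H; rewrite leqNgt; apply/negP => d4.
have c0 : #|setof s0| = 4 by rewrite card_setof // (eqP sz0).
have [S [S0S Sd]] : exists S : {set 'I_v}, setof s0 \subset S /\ #|S| = d.
  by apply: extend; rewrite c0 d4 -(card_ord v).
have [Y [[fY pY] SY]] := H S Sd.
case/negP: pY; apply/eqP/setP => i; rewrite inE; apply: (@closure Y fY k (bvof s0)).
  move=> j; rewrite nth_bvof ?ltn_ord // => js.
  apply: (subsetP SY); apply: (subsetP S0S); by rewrite in_setof.
by apply: (allP gen); rewrite mem_iota add0n ltn_ord.
Qed.

End Gen.

Lemma sound v bl fl s0 k : check v bl fl s0 k ->
  exists B : {set {set 'I_v}}, is_PBD K34 B /\ has_dimension B 3.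
Proof.
rewrite /check => /and4P[Hb Hp /andP[Hf Ht] Hg].
exists (Bof v bl); split; first exact: is_PBD_Bof.
exact: (dim3 Hb Hp Hf Ht Hg).
Qed.

Definition bl58 : seq (seq nat) := [:: [:: 0; 1; 57];
 [:: 2; 3; 57];
 [:: 4; 5; 57];
 [:: 6; 7; 57];
 [:: 8; 9; 57];
 [:: 10; 11; 57];
 [:: 12; 13; 57];
 [:: 14; 15; 57];
 [:: 16; 17; 57];
 [:: 18; 19; 20; 57];
 [:: 21; 22; 57];
 [:: 23; 24; 57];
 [:: 25; 26; 57];
 [:: 27; 28; 57];
 [:: 29; 30; 57];
 [:: 31; 32; 57];
 [:: 33; 34; 57];
 [:: 35; 36; 57];
 [:: 37; 38; 57];
 [:: 39; 40; 57];
 [:: 41; 42; 57];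
 [:: 43; 44; 57];
 [:: 45; 46; 57];
 [:: 47; 48; 57];
 [:: 49; 50; 57];
 [:: 51; 52; 57];
 [:: 53; 54; 57];
 [:: 55; 56; 57];
 [:: 2; 8; 16];
 [:: 3; 8; 17];
 [:: 3; 9; 16];
 [:: 2; 9; 17];
 [:: 21; 41; 49];
 [:: 22; 41; 50];
 [:: 22; 42; 49];
 [:: 21; 42; 50];
 [:: 6; 43; 55];
 [:: 7; 43; 56];
 [:: 7; 44; 55];
 [:: 6; 44; 56];
 [:: 14; 25; 55];
 [:: 15; 25; 56];
 [:: 15; 26; 55];
 [:: 14; 26; 56];
 [:: 8; 41; 53];
 [:: 9; 41; 54];
 [:: 9; 42; 53];
 [:: 8; 42; 54];
 [:: 4; 33; 41];
 [:: 5; 33; 42];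
 [:: 5; 34; 41];
 [:: 4; 34; 42];
 [:: 0; 49; 51];
 [:: 1; 49; 52];
 [:: 1; 50; 51];
 [:: 0; 50; 52];
 [:: 12; 23; 37];
 [:: 13; 23; 38];
 [:: 13; 24; 37];
 [:: 12; 24; 38];
 [:: 8; 36; 19];
 [:: 35; 47; 19];
 [:: 8; 47; 18];
 [:: 9; 36; 47; 20];
 [:: 8; 35; 48; 20];
 [:: 9; 48; 19];
 [:: 9; 35; 18];
 [:: 36; 48; 18];
 [:: 0; 37; 39];
 [:: 1; 37; 40];
 [:: 1; 38; 39];
 [:: 0; 38; 40];
 [:: 23; 25; 31];
 [:: 24; 25; 32];
 [:: 24; 26; 31];
 [:: 23; 26; 32];
 [:: 16; 33; 55];
 [:: 17; 33; 56];
 [:: 17; 34; 55];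
 [:: 16; 34; 56];
 [:: 31; 33; 51];
 [:: 32; 33; 52];
 [:: 32; 34; 51];
 [:: 31; 34; 52];
 [:: 6; 39; 49];
 [:: 7; 39; 50];
 [:: 7; 40; 49];
 [:: 6; 40; 50];
 [:: 8; 23; 45];
 [:: 9; 23; 46];
 [:: 9; 24; 45];
 [:: 8; 24; 46];
 [:: 16; 39; 45];
 [:: 17; 39; 46];
 [:: 17; 40; 45];
 [:: 16; 40; 46];
 [:: 4; 23; 29];
 [:: 5; 23; 30];
 [:: 5; 24; 29];
 [:: 4; 24; 30];
 [:: 2; 33; 37];
 [:: 3; 33; 38];
 [:: 3; 34; 37];
 [:: 2; 34; 38];
 [:: 4; 47; 55];
 [:: 5; 47; 56];
 [:: 5; 48; 55];
 [:: 4; 48; 56];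
 [:: 33; 39; 43];
 [:: 34; 39; 44];
 [:: 34; 40; 43];
 [:: 33; 40; 44];
 [:: 12; 43; 45];
 [:: 13; 43; 46];
 [:: 13; 44; 45];
 [:: 12; 44; 46];
 [:: 8; 31; 55];
 [:: 9; 31; 56];
 [:: 9; 32; 55];
 [:: 8; 32; 56];
 [:: 12; 21; 53];
 [:: 13; 21; 54];
 [:: 13; 22; 53];
 [:: 12; 22; 54];
 [:: 16; 27; 53];
 [:: 17; 27; 54];
 [:: 17; 28; 53];
 [:: 16; 28; 54];
 [:: 10; 21; 39];
 [:: 11; 21; 40];
 [:: 11; 22; 39];
 [:: 10; 22; 40];
 [:: 8; 27; 39];
 [:: 9; 27; 40];
 [:: 9; 28; 39];
 [:: 8; 28; 40];
 [:: 12; 33; 49];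
 [:: 13; 33; 50];
 [:: 13; 34; 49];
 [:: 12; 34; 50];
 [:: 23; 39; 53];
 [:: 24; 39; 54];
 [:: 24; 40; 53];
 [:: 23; 40; 54];
 [:: 29; 35; 49];
 [:: 30; 35; 50];
 [:: 30; 36; 49];
 [:: 29; 36; 50];
 [:: 4; 21; 25];
 [:: 5; 21; 26];
 [:: 5; 22; 25];
 [:: 4; 22; 26];
 [:: 2; 47; 49];
 [:: 3; 47; 50];
 [:: 3; 48; 49];
 [:: 2; 48; 50];
 [:: 10; 38; 19];
 [:: 37; 53; 19];
 [:: 10; 53; 18];
 [:: 11; 38; 53; 20];
 [:: 10; 37; 54; 20];
 [:: 11; 54; 19];
 [:: 11; 37; 18];
 [:: 38; 54; 18];
 [:: 14; 31; 45];
 [:: 15; 31; 46];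
 [:: 15; 32; 45];
 [:: 14; 32; 46];
 [:: 0; 45; 47];
 [:: 1; 45; 48];
 [:: 1; 46; 47];
 [:: 0; 46; 48];
 [:: 35; 37; 41];
 [:: 36; 37; 42];
 [:: 36; 38; 41];
 [:: 35; 38; 42];
 [:: 8; 37; 51];
 [:: 9; 37; 52];
 [:: 9; 38; 51];
 [:: 8; 38; 52];
 [:: 0; 29; 31];
 [:: 1; 29; 32];
 [:: 1; 30; 31];
 [:: 0; 30; 32];
 [:: 12; 25; 41];
 [:: 13; 25; 42];
 [:: 13; 26; 41];
 [:: 12; 26; 42];
 [:: 10; 23; 55];
 [:: 11; 23; 56];
 [:: 11; 24; 55];
 [:: 10; 24; 56];
 [:: 0; 10; 12];
 [:: 1; 10; 13];
 [:: 1; 11; 12];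
 [:: 0; 11; 13];
 [:: 2; 12; 14];
 [:: 3; 12; 15];
 [:: 3; 13; 14];
 [:: 2; 13; 15];
 [:: 47; 51; 53];
 [:: 48; 51; 54];
 [:: 48; 52; 53];
 [:: 47; 52; 54];
 [:: 14; 29; 39];
 [:: 15; 29; 40];
 [:: 15; 30; 39];
 [:: 14; 30; 40];
 [:: 4; 37; 43];
 [:: 5; 37; 44];
 [:: 5; 38; 43];
 [:: 4; 38; 44];
 [:: 23; 33; 47];
 [:: 24; 33; 48];
 [:: 24; 34; 47];
 [:: 23; 34; 48];
 [:: 4; 45; 51];
 [:: 5; 45; 52];
 [:: 5; 46; 51];
 [:: 4; 46; 52];
 [:: 27; 41; 45];
 [:: 28; 41; 46];
 [:: 28; 42; 45];
 [:: 27; 42; 46];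
 [:: 16; 25; 35];
 [:: 17; 25; 36];
 [:: 17; 26; 35];
 [:: 16; 26; 36];
 [:: 14; 42; 19];
 [:: 41; 51; 19];
 [:: 14; 51; 18];
 [:: 15; 42; 51; 20];
 [:: 14; 41; 52; 20];
 [:: 15; 52; 19];
 [:: 15; 41; 18];
 [:: 42; 52; 18];
 [:: 31; 43; 53];
 [:: 32; 43; 54];
 [:: 32; 44; 53];
 [:: 31; 44; 54];
 [:: 2; 23; 27];
 [:: 3; 23; 28];
 [:: 3; 24; 27];
 [:: 2; 24; 28];
 [:: 16; 31; 37];
 [:: 17; 31; 38];
 [:: 17; 32; 37];
 [:: 16; 32; 38];
 [:: 6; 12; 16];
 [:: 7; 12; 17];
 [:: 7; 13; 16];
 [:: 6; 13; 17];
 [:: 2; 45; 53];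
 [:: 3; 45; 54];
 [:: 3; 46; 53];
 [:: 2; 46; 54];
 [:: 2; 35; 43];
 [:: 3; 35; 44];
 [:: 3; 36; 43];
 [:: 2; 36; 44];
 [:: 23; 43; 51];
 [:: 24; 43; 52];
 [:: 24; 44; 51];
 [:: 23; 44; 52];
 [:: 0; 2; 4];
 [:: 1; 2; 5];
 [:: 1; 3; 4];
 [:: 0; 3; 5];
 [:: 0; 14; 16];
 [:: 1; 14; 17];
 [:: 1; 15; 16];
 [:: 0; 15; 17];
 [:: 21; 37; 55];
 [:: 22; 37; 56];
 [:: 22; 38; 55];
 [:: 21; 38; 56];
 [:: 8; 29; 43];
 [:: 9; 29; 44];
 [:: 9; 30; 43];
 [:: 8; 30; 44];
 [:: 14; 27; 33];
 [:: 15; 27; 34];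
 [:: 15; 28; 33];
 [:: 14; 28; 34];
 [:: 29; 41; 55];
 [:: 30; 41; 56];
 [:: 30; 42; 55];
 [:: 29; 42; 56];
 [:: 16; 23; 41];
 [:: 17; 23; 42];
 [:: 17; 24; 41];
 [:: 16; 24; 42];
 [:: 2; 51; 55];
 [:: 3; 51; 56];
 [:: 3; 52; 55];
 [:: 2; 52; 56];
 [:: 4; 8; 12];
 [:: 5; 8; 13];
 [:: 5; 9; 12];
 [:: 4; 9; 13];
 [:: 4; 6; 14];
 [:: 5; 6; 15];
 [:: 5; 7; 14];
 [:: 4; 7; 15];
 [:: 8; 25; 49];
 [:: 9; 25; 50];
 [:: 9; 26; 49];
 [:: 8; 26; 50];
 [:: 6; 23; 35];
 [:: 7; 23; 36];
 [:: 7; 24; 35];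
 [:: 6; 24; 36];
 [:: 45; 49; 55];
 [:: 46; 49; 56];
 [:: 46; 50; 55];
 [:: 45; 50; 56];
 [:: 10; 31; 49];
 [:: 11; 31; 50];
 [:: 11; 32; 49];
 [:: 10; 32; 50];
 [:: 21; 35; 45];
 [:: 22; 35; 46];
 [:: 22; 36; 45];
 [:: 21; 36; 46];
 [:: 12; 29; 51];
 [:: 13; 29; 52];
 [:: 13; 30; 51];
 [:: 12; 30; 52];
 [:: 31; 39; 47];
 [:: 32; 39; 48];
 [:: 32; 40; 47];
 [:: 31; 40; 48];
 [:: 10; 25; 45];
 [:: 11; 25; 46];
 [:: 11; 26; 45];
 [:: 10; 26; 46];
 [:: 14; 23; 49];
 [:: 15; 23; 50];
 [:: 15; 24; 49];
 [:: 14; 24; 50];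
 [:: 12; 31; 35];
 [:: 13; 31; 36];
 [:: 13; 32; 35];
 [:: 12; 32; 36];
 [:: 21; 27; 29];
 [:: 22; 27; 30];
 [:: 22; 28; 29];
 [:: 21; 28; 30];
 [:: 16; 21; 51];
 [:: 17; 21; 52];
 [:: 17; 22; 51];
 [:: 16; 22; 52];
 [:: 8; 21; 33];
 [:: 9; 21; 34];
 [:: 9; 22; 33];
 [:: 8; 22; 34];
 [:: 10; 29; 33];
 [:: 11; 29; 34];
 [:: 11; 30; 33];
 [:: 10; 30; 34];
 [:: 2; 6; 10];
 [:: 3; 6; 11];
 [:: 3; 7; 10];
 [:: 2; 7; 11];
 [:: 12; 27; 47];
 [:: 13; 27; 48];
 [:: 13; 28; 47];
 [:: 12; 28; 48];
 [:: 25; 33; 53];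
 [:: 26; 33; 54];
 [:: 26; 34; 53];
 [:: 25; 34; 54];
 [:: 0; 22; 19];
 [:: 21; 23; 19];
 [:: 0; 23; 18];
 [:: 1; 22; 23; 20];
 [:: 0; 21; 24; 20];
 [:: 1; 24; 19];
 [:: 1; 21; 18];
 [:: 22; 24; 18];
 [:: 14; 21; 43];
 [:: 15; 21; 44];
 [:: 15; 22; 43];
 [:: 14; 22; 44];
 [:: 10; 35; 51];
 [:: 11; 35; 52];
 [:: 11; 36; 51];
 [:: 10; 36; 52];
 [:: 16; 44; 19];
 [:: 43; 49; 19];
 [:: 16; 49; 18];
 [:: 17; 44; 49; 20];
 [:: 16; 43; 50; 20];
 [:: 17; 50; 19];
 [:: 17; 43; 18];
 [:: 44; 50; 18];
 [:: 10; 27; 43];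
 [:: 11; 27; 44];
 [:: 11; 28; 43];
 [:: 10; 28; 44];
 [:: 6; 25; 37];
 [:: 7; 25; 38];
 [:: 7; 26; 37];
 [:: 6; 26; 38];
 [:: 6; 27; 51];
 [:: 7; 27; 52];
 [:: 7; 28; 51];
 [:: 6; 28; 52];
 [:: 6; 29; 53];
 [:: 7; 29; 54];
 [:: 7; 30; 53];
 [:: 6; 30; 54];
 [:: 6; 31; 41];
 [:: 7; 31; 42];
 [:: 7; 32; 41];
 [:: 6; 32; 42];
 [:: 0; 6; 8];
 [:: 1; 6; 9];
 [:: 1; 7; 8];
 [:: 0; 7; 9];
 [:: 2; 26; 19];
 [:: 25; 29; 19];
 [:: 2; 29; 18];
 [:: 3; 26; 29; 20];
 [:: 2; 25; 30; 20];
 [:: 3; 30; 19];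
 [:: 3; 25; 18];
 [:: 26; 30; 18];
 [:: 2; 39; 41];
 [:: 3; 39; 42];
 [:: 3; 40; 41];
 [:: 2; 40; 42];
 [:: 25; 43; 47];
 [:: 26; 43; 48];
 [:: 26; 44; 47];
 [:: 25; 44; 48];
 [:: 4; 49; 53];
 [:: 5; 49; 54];
 [:: 5; 50; 53];
 [:: 4; 50; 54];
 [:: 12; 40; 19];
 [:: 39; 55; 19];
 [:: 12; 55; 18];
 [:: 13; 40; 55; 20];
 [:: 12; 39; 56; 20];
 [:: 13; 56; 19];
 [:: 13; 39; 18];
 [:: 40; 56; 18];
 [:: 10; 41; 47];
 [:: 11; 41; 48];
 [:: 11; 42; 47];
 [:: 10; 42; 48];
 [:: 0; 53; 55];
 [:: 1; 53; 56];
 [:: 1; 54; 55];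
 [:: 0; 54; 56];
 [:: 27; 37; 49];
 [:: 28; 37; 50];
 [:: 28; 38; 49];
 [:: 27; 38; 50];
 [:: 6; 21; 47];
 [:: 7; 21; 48];
 [:: 7; 22; 47];
 [:: 6; 22; 48];
 [:: 0; 25; 27];
 [:: 1; 25; 28];
 [:: 1; 26; 27];
 [:: 0; 26; 28];
 [:: 16; 29; 47];
 [:: 17; 29; 48];
 [:: 17; 30; 47];
 [:: 16; 30; 48];
 [:: 14; 37; 47];
 [:: 15; 37; 48];
 [:: 15; 38; 47];
 [:: 14; 38; 48];
 [:: 2; 21; 31];
 [:: 3; 21; 32];
 [:: 3; 22; 31];
 [:: 2; 22; 32];
 [:: 4; 10; 16];
 [:: 5; 10; 17];
 [:: 5; 11; 16];
 [:: 4; 11; 17];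
 [:: 8; 10; 14];
 [:: 9; 10; 15];
 [:: 9; 11; 14];
 [:: 8; 11; 15];
 [:: 14; 35; 53];
 [:: 15; 35; 54];
 [:: 15; 36; 53];
 [:: 14; 36; 54];
 [:: 0; 33; 35];
 [:: 1; 33; 36];
 [:: 1; 34; 35];
 [:: 0; 34; 36];
 [:: 27; 35; 55];
 [:: 28; 35; 56];
 [:: 28; 36; 55];
 [:: 27; 36; 56];
 [:: 4; 28; 19];
 [:: 27; 31; 19];
 [:: 4; 31; 18];
 [:: 5; 28; 31; 20];
 [:: 4; 27; 32; 20];
 [:: 5; 32; 19];
 [:: 5; 27; 18];
 [:: 28; 32; 18];
 [:: 6; 34; 19];
 [:: 33; 45; 19];
 [:: 6; 45; 18];
 [:: 7; 34; 45; 20];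
 [:: 6; 33; 46; 20];
 [:: 7; 46; 19];
 [:: 7; 33; 18];
 [:: 34; 46; 18];
 [:: 29; 37; 45];
 [:: 30; 37; 46];
 [:: 30; 38; 45];
 [:: 29; 38; 46];
 [:: 0; 41; 43];
 [:: 1; 41; 44];
 [:: 1; 42; 43];
 [:: 0; 42; 44];
 [:: 4; 35; 39];
 [:: 5; 35; 40];
 [:: 5; 36; 39];
 [:: 4; 36; 40];
 [:: 25; 39; 51];
 [:: 26; 39; 52];
 [:: 26; 40; 51];
 [:: 25; 40; 52]].
Definition fl58 : seq (seq nat) := [:: [:: 0; 1; 49; 50; 51; 52; 57];
 [:: 6; 7; 12; 13; 16; 17; 18; 19; 20; 33; 34; 39; 40; 43; 44; 45; 46; 49; 50; 55; 56; 57];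
 [:: 0; 1; 18; 19; 20; 21; 22; 23; 24; 57];
 [:: 2; 6; 10; 21; 31; 39; 41; 47; 49];
 [:: 0; 1; 25; 26; 27; 28; 57];
 [:: 0; 1; 10; 11; 12; 13; 57];
 [:: 0; 1; 14; 15; 16; 17; 25; 26; 27; 28; 33; 34; 35; 36; 53; 54; 55; 56; 57];
 [:: 21; 27; 29; 35; 37; 41; 45; 49; 55];
 [:: 0; 1; 2; 3; 4; 5; 57];
 [:: 0; 1; 2; 3; 4; 5; 45; 46; 47; 48; 49; 50; 51; 52; 53; 54; 55; 56; 57];
 [:: 4; 5; 8; 9; 12; 13; 23; 24; 29; 30; 37; 38; 43; 44; 45; 46; 51; 52; 57];
 [:: 6; 12; 16; 23; 25; 31; 35; 37; 41];
 [:: 0; 1; 45; 46; 47; 48; 57];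
 [:: 0; 1; 14; 15; 16; 17; 29; 30; 31; 32; 37; 38; 39; 40; 45; 46; 47; 48; 57];
 [:: 0; 1; 29; 30; 31; 32; 57];
 [:: 2; 3; 6; 7; 10; 11; 18; 19; 20; 25; 26; 29; 30; 33; 34; 37; 38; 45; 46; 53; 54; 57];
 [:: 0; 6; 8; 29; 31; 41; 43; 53; 55];
 [:: 0; 2; 4; 45; 47; 49; 51; 53; 55];
 [:: 23; 25; 31; 33; 39; 43; 47; 51; 53];
 [:: 0; 1; 6; 7; 8; 9; 18; 19; 20; 21; 22; 23; 24; 33; 34; 35; 36; 45; 46; 47; 48; 57];
 [:: 8; 10; 14; 23; 25; 31; 45; 49; 55];
 [:: 0; 1; 10; 11; 12; 13; 25; 26; 27; 28; 41; 42; 43; 44; 45; 46; 47; 48; 57];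
 [:: 4; 5; 10; 11; 16; 17; 21; 22; 25; 26; 35; 36; 39; 40; 45; 46; 51; 52; 57];
 [:: 4; 5; 10; 11; 16; 17; 23; 24; 29; 30; 33; 34; 41; 42; 47; 48; 55; 56; 57];
 [:: 4; 10; 16; 21; 25; 35; 39; 45; 51];
 [:: 2; 3; 8; 9; 16; 17; 21; 22; 31; 32; 33; 34; 37; 38; 51; 52; 55; 56; 57];
 [:: 2; 6; 10; 23; 27; 35; 43; 51; 55];
 [:: 0; 1; 2; 3; 4; 5; 33; 34; 35; 36; 37; 38; 39; 40; 41; 42; 43; 44; 57];
 [:: 0; 2; 4; 33; 35; 37; 39; 41; 43];
 [:: 0; 1; 10; 11; 12; 13; 29; 30; 31; 32; 33; 34; 35; 36; 49; 50; 51; 52; 57];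
 [:: 8; 9; 10; 11; 14; 15; 21; 22; 27; 28; 29; 30; 33; 34; 39; 40; 43; 44; 57];
 [:: 0; 10; 12; 25; 27; 41; 43; 45; 47];
 [:: 0; 1; 10; 11; 12; 13; 18; 19; 20; 21; 22; 23; 24; 37; 38; 39; 40; 53; 54; 55; 56; 57];
 [:: 0; 1; 6; 7; 8; 9; 25; 26; 27; 28; 37; 38; 39; 40; 49; 50; 51; 52; 57];
 [:: 2; 8; 16; 21; 31; 33; 37; 51; 55];
 [:: 4; 5; 10; 11; 16; 17; 18; 19; 20; 27; 28; 31; 32; 37; 38; 43; 44; 49; 50; 53; 54; 57];
 [:: 0; 1; 14; 15; 16; 17; 18; 19; 20; 21; 22; 23; 24; 41; 42; 43; 44; 49; 50; 51; 52; 57];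
 [:: 0; 1; 33; 34; 35; 36; 57];
 [:: 2; 3; 6; 7; 10; 11; 21; 22; 31; 32; 39; 40; 41; 42; 47; 48; 49; 50; 57];
 [:: 4; 5; 6; 7; 14; 15; 21; 22; 25; 26; 37; 38; 43; 44; 47; 48; 55; 56; 57];
 [:: 0; 1; 6; 7; 8; 9; 29; 30; 31; 32; 41; 42; 43; 44; 53; 54; 55; 56; 57];
 [:: 6; 12; 16; 21; 27; 29; 47; 51; 53];
 [:: 8; 9; 10; 11; 14; 15; 18; 19; 20; 35; 36; 37; 38; 41; 42; 47; 48; 51; 52; 53; 54; 57];
 [:: 6; 7; 12; 13; 16; 17; 23; 24; 25; 26; 31; 32; 35; 36; 37; 38; 41; 42; 57];
 [:: 4; 6; 14; 23; 29; 35; 39; 49; 53];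
 [:: 2; 12; 14; 23; 27; 33; 37; 47; 49];
 [:: 0; 14; 16; 25; 27; 33; 35; 53; 55];
 [:: 0; 1; 37; 38; 39; 40; 57];
 [:: 4; 5; 6; 7; 14; 15; 18; 19; 20; 27; 28; 31; 32; 33; 34; 41; 42; 45; 46; 51; 52; 57];
 [:: 0; 6; 8; 25; 27; 37; 39; 49; 51];
 [:: 4; 5; 8; 9; 12; 13; 21; 22; 25; 26; 33; 34; 41; 42; 49; 50; 53; 54; 57];
 [:: 0; 1; 53; 54; 55; 56; 57];
 [:: 21; 22; 27; 28; 29; 30; 35; 36; 37; 38; 41; 42; 45; 46; 49; 50; 55; 56; 57];
 [:: 4; 6; 14; 21; 25; 37; 43; 47; 55];
 [:: 2; 8; 16; 23; 27; 39; 41; 45; 53];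
 [:: 0; 1; 2; 3; 4; 5; 6; 7; 8; 9; 10; 11; 12; 13; 14; 15; 16; 17; 57];
 [:: 4; 8; 12; 21; 25; 33; 41; 49; 53];
 [:: 0; 1; 2; 3; 4; 5; 18; 19; 20; 21; 22; 23; 24; 25; 26; 27; 28; 29; 30; 31; 32; 57];
 [:: 8; 9; 10; 11; 14; 15; 23; 24; 25; 26; 31; 32; 45; 46; 49; 50; 55; 56; 57];
 [:: 0; 10; 12; 29; 31; 33; 35; 49; 51];
 [:: 0; 2; 4; 6; 8; 10; 12; 14; 16];
 [:: 0; 1; 6; 7; 8; 9; 57];
 [:: 2; 3; 6; 7; 10; 11; 23; 24; 27; 28; 35; 36; 43; 44; 51; 52; 55; 56; 57];
 [:: 8; 10; 14; 21; 27; 29; 33; 39; 43];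
 [:: 6; 7; 12; 13; 16; 17; 21; 22; 27; 28; 29; 30; 47; 48; 51; 52; 53; 54; 57];
 [:: 2; 3; 8; 9; 16; 17; 18; 19; 20; 25; 26; 29; 30; 35; 36; 43; 44; 47; 48; 49; 50; 57];
 [:: 0; 14; 16; 29; 31; 37; 39; 45; 47];
 [:: 4; 5; 6; 7; 14; 15; 23; 24; 29; 30; 35; 36; 39; 40; 49; 50; 53; 54; 57];
 [:: 4; 10; 16; 23; 29; 33; 41; 47; 55];
 [:: 2; 3; 12; 13; 14; 15; 21; 22; 31; 32; 35; 36; 43; 44; 45; 46; 53; 54; 57];
 [:: 0; 1; 14; 15; 16; 17; 57];
 [:: 0; 1; 41; 42; 43; 44; 57];
 [:: 2; 3; 8; 9; 16; 17; 23; 24; 27; 28; 39; 40; 41; 42; 45; 46; 53; 54; 57];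
 [:: 2; 3; 12; 13; 14; 15; 23; 24; 27; 28; 33; 34; 37; 38; 47; 48; 49; 50; 57];
 [:: 2; 12; 14; 21; 31; 35; 43; 45; 53];
 [:: 4; 5; 8; 9; 12; 13; 18; 19; 20; 27; 28; 31; 32; 35; 36; 39; 40; 47; 48; 55; 56; 57];
 [:: 4; 8; 12; 23; 29; 37; 43; 45; 51];
 [:: 23; 24; 25; 26; 31; 32; 33; 34; 39; 40; 43; 44; 47; 48; 51; 52; 53; 54; 57];
 [:: 2; 3; 12; 13; 14; 15; 18; 19; 20; 25; 26; 29; 30; 39; 40; 41; 42; 51; 52; 55; 56; 57]].
Definition s58 : seq nat := [:: 7; 17; 11; 43].
Definition k58 := 3.

Definition bl66 : seq (seq nat) := [:: [:: 4; 12; 21];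
 [:: 8; 10; 19];
 [:: 8; 16; 20];
 [:: 7; 10; 20];
 [:: 8; 15; 21];
 [:: 9; 11; 17];
 [:: 3; 15; 19];
 [:: 3; 16; 18];
 [:: 4; 10; 23];
 [:: 8; 14; 22];
 [:: 6; 14; 17];
 [:: 8; 13; 23];
 [:: 3; 10; 17];
 [:: 5; 14; 18];
 [:: 7; 14; 23];
 [:: 9; 16; 19];
 [:: 6; 13; 18];
 [:: 6; 12; 19];
 [:: 9; 10; 18];
 [:: 5; 12; 20];
 [:: 5; 13; 19];
 [:: 3; 14; 20];
 [:: 3; 13; 21];
 [:: 9; 15; 20];
 [:: 4; 15; 18];
 [:: 4; 16; 17];
 [:: 8; 11; 18];
 [:: 5; 11; 21];
 [:: 7; 13; 17];
 [:: 3; 12; 22];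
 [:: 6; 16; 22];
 [:: 9; 14; 21];
 [:: 8; 12; 17];
 [:: 9; 13; 22];
 [:: 5; 16; 23];
 [:: 6; 10; 21];
 [:: 6; 11; 20];
 [:: 5; 10; 22];
 [:: 4; 14; 19];
 [:: 6; 15; 23];
 [:: 3; 11; 23];
 [:: 9; 12; 23];
 [:: 7; 12; 18];
 [:: 4; 13; 20];
 [:: 7; 11; 19];
 [:: 5; 15; 17];
 [:: 7; 16; 21];
 [:: 4; 11; 22];
 [:: 7; 15; 22];
 [:: 4; 24; 50];
 [:: 8; 30; 46];
 [:: 6; 27; 48];
 [:: 8; 29; 50];
 [:: 6; 30; 50];
 [:: 5; 30; 45];
 [:: 3; 28; 50];
 [:: 7; 29; 45];
 [:: 6; 24; 46];
 [:: 8; 26; 48];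
 [:: 5; 29; 49];
 [:: 4; 27; 45];
 [:: 3; 25; 48];
 [:: 7; 25; 47];
 [:: 4; 30; 47];
 [:: 5; 26; 47];
 [:: 7; 28; 49];
 [:: 9; 28; 45];
 [:: 9; 30; 51];
 [:: 4; 29; 51];
 [:: 6; 29; 47];
 [:: 5; 25; 51];
 [:: 9; 24; 47];
 [:: 9; 27; 49];
 [:: 7; 24; 51];
 [:: 8; 25; 45];
 [:: 4; 26; 49];
 [:: 6; 26; 45];
 [:: 3; 24; 45];
 [:: 5; 28; 46];
 [:: 5; 27; 50];
 [:: 3; 27; 47];
 [:: 6; 25; 49];
 [:: 3; 30; 49];
 [:: 6; 28; 51];
 [:: 8; 28; 47];
 [:: 8; 27; 51];
 [:: 5; 24; 48];
 [:: 7; 27; 46];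
 [:: 3; 26; 51];
 [:: 4; 25; 46];
 [:: 7; 30; 48];
 [:: 8; 24; 49];
 [:: 9; 29; 48];
 [:: 4; 28; 48];
 [:: 7; 26; 50];
 [:: 9; 26; 46];
 [:: 9; 25; 50];
 [:: 3; 29; 46];
 [:: 8; 31; 60];
 [:: 6; 31; 61];
 [:: 9; 31; 63];
 [:: 7; 31; 64];
 [:: 4; 37; 59];
 [:: 8; 37; 64];
 [:: 3; 36; 60];
 [:: 9; 37; 60];
 [:: 4; 36; 63];
 [:: 7; 34; 59];
 [:: 3; 32; 62];
 [:: 5; 34; 60];
 [:: 7; 37; 61];
 [:: 5; 37; 62];
 [:: 6; 33; 60];
 [:: 4; 33; 61];
 [:: 4; 32; 65];
 [:: 7; 36; 65];
 [:: 8; 33; 59];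
 [:: 9; 36; 64];
 [:: 8; 36; 61];
 [:: 6; 36; 62];
 [:: 9; 34; 65];
 [:: 5; 33; 64];
 [:: 9; 33; 62];
 [:: 7; 33; 63];
 [:: 3; 35; 64];
 [:: 5; 35; 63];
 [:: 8; 32; 63];
 [:: 8; 35; 65];
 [:: 5; 36; 59];
 [:: 6; 32; 64];
 [:: 4; 35; 60];
 [:: 9; 32; 59];
 [:: 7; 32; 60];
 [:: 3; 34; 61];
 [:: 3; 37; 63];
 [:: 4; 31; 62];
 [:: 6; 35; 59];
 [:: 8; 34; 62];
 [:: 6; 37; 65];
 [:: 6; 34; 63];
 [:: 4; 34; 64];
 [:: 3; 31; 59];
 [:: 5; 32; 61];
 [:: 5; 31; 65];
 [:: 9; 35; 61];
 [:: 7; 35; 62];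
 [:: 3; 33; 65];
 [:: 3; 38; 52];
 [:: 3; 40; 58];
 [:: 4; 38; 58];
 [:: 9; 41; 55];
 [:: 3; 44; 56];
 [:: 9; 44; 57];
 [:: 8; 43; 55];
 [:: 4; 44; 55];
 [:: 7; 40; 54];
 [:: 9; 38; 53];
 [:: 7; 43; 56];
 [:: 8; 40; 53];
 [:: 4; 41; 53];
 [:: 8; 39; 57];
 [:: 6; 42; 54];
 [:: 6; 41; 58];
 [:: 5; 42; 55];
 [:: 7; 39; 58];
 [:: 3; 43; 53];
 [:: 6; 39; 52];
 [:: 6; 38; 56];
 [:: 5; 39; 53];
 [:: 4; 40; 57];
 [:: 5; 38; 57];
 [:: 3; 39; 55];
 [:: 9; 43; 54];
 [:: 9; 42; 58];
 [:: 3; 42; 57];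
 [:: 8; 42; 52];
 [:: 9; 40; 52];
 [:: 5; 41; 52];
 [:: 9; 39; 56];
 [:: 5; 44; 54];
 [:: 7; 42; 53];
 [:: 7; 41; 57];
 [:: 8; 38; 54];
 [:: 4; 39; 54];
 [:: 4; 43; 52];
 [:: 8; 41; 56];
 [:: 4; 42; 56];
 [:: 7; 38; 55];
 [:: 6; 44; 53];
 [:: 8; 44; 58];
 [:: 6; 43; 57];
 [:: 5; 40; 56];
 [:: 3; 41; 54];
 [:: 5; 43; 58];
 [:: 7; 44; 52];
 [:: 6; 40; 55];
 [:: 12; 30; 61];
 [:: 12; 29; 65];
 [:: 13; 26; 62];
 [:: 11; 30; 62];
 [:: 14; 25; 65];
 [:: 13; 29; 64];
 [:: 12; 26; 63];
 [:: 16; 29; 61];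
 [:: 15; 25; 64];
 [:: 11; 26; 64];
 [:: 10; 25; 62];
 [:: 16; 26; 59];
 [:: 16; 25; 63];
 [:: 14; 28; 60];
 [:: 10; 28; 64];
 [:: 15; 28; 59];
 [:: 11; 29; 59];
 [:: 15; 27; 63];
 [:: 14; 24; 62];
 [:: 15; 30; 65];
 [:: 16; 28; 65];
 [:: 12; 25; 60];
 [:: 14; 27; 64];
 [:: 15; 24; 61];
 [:: 11; 25; 61];
 [:: 13; 25; 59];
 [:: 10; 24; 59];
 [:: 11; 28; 63];
 [:: 13; 28; 61];
 [:: 13; 27; 65];
 [:: 12; 28; 62];
 [:: 10; 27; 61];
 [:: 11; 24; 65];
 [:: 10; 30; 63];
 [:: 13; 24; 63];
 [:: 16; 24; 60];
 [:: 12; 24; 64];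
 [:: 14; 30; 59];
 [:: 10; 26; 65];
 [:: 14; 29; 63];
 [:: 16; 27; 62];
 [:: 16; 30; 64];
 [:: 15; 26; 60];
 [:: 11; 27; 60];
 [:: 15; 29; 62];
 [:: 14; 26; 61];
 [:: 13; 30; 60];
 [:: 12; 27; 59];
 [:: 10; 29; 60];
 [:: 14; 33; 57];
 [:: 12; 32; 58];
 [:: 16; 36; 55];
 [:: 11; 35; 55];
 [:: 13; 36; 54];
 [:: 16; 32; 57];
 [:: 10; 36; 53];
 [:: 11; 31; 57];
 [:: 13; 33; 52];
 [:: 13; 32; 56];
 [:: 15; 37; 53];
 [:: 15; 36; 57];
 [:: 13; 35; 58];
 [:: 11; 37; 54];
 [:: 10; 35; 57];
 [:: 14; 36; 52];
 [:: 12; 35; 53];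
 [:: 12; 34; 57];
 [:: 15; 33; 55];
 [:: 16; 37; 58];
 [:: 11; 34; 52];
 [:: 10; 32; 55];
 [:: 14; 32; 54];
 [:: 12; 31; 55];
 [:: 11; 36; 58];
 [:: 14; 35; 56];
 [:: 16; 35; 52];
 [:: 16; 34; 56];
 [:: 11; 33; 56];
 [:: 14; 31; 58];
 [:: 16; 31; 54];
 [:: 10; 34; 54];
 [:: 12; 37; 52];
 [:: 13; 31; 53];
 [:: 10; 37; 56];
 [:: 10; 31; 52];
 [:: 15; 35; 54];
 [:: 14; 34; 53];
 [:: 13; 34; 55];
 [:: 12; 33; 54];
 [:: 15; 34; 58];
 [:: 13; 37; 57];
 [:: 10; 33; 58];
 [:: 11; 32; 53];
 [:: 15; 32; 52];
 [:: 14; 37; 55];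
 [:: 12; 36; 56];
 [:: 15; 31; 56];
 [:: 16; 33; 53];
 [:: 11; 44; 45];
 [:: 15; 44; 50];
 [:: 16; 38; 49];
 [:: 14; 38; 50];
 [:: 12; 40; 50];
 [:: 10; 40; 51];
 [:: 14; 41; 45];
 [:: 12; 43; 45];
 [:: 10; 43; 46];
 [:: 16; 44; 46];
 [:: 11; 40; 47];
 [:: 15; 43; 47];
 [:: 11; 43; 49];
 [:: 12; 39; 47];
 [:: 14; 44; 47];
 [:: 10; 42; 50];
 [:: 14; 43; 51];
 [:: 12; 42; 49];
 [:: 15; 40; 45];
 [:: 16; 43; 50];
 [:: 11; 39; 51];
 [:: 13; 42; 45];
 [:: 10; 39; 48];
 [:: 13; 41; 49];
 [:: 15; 42; 51];
 [:: 14; 40; 49];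
 [:: 13; 44; 51];
 [:: 16; 40; 48];
 [:: 12; 38; 51];
 [:: 13; 38; 47];
 [:: 15; 39; 49];
 [:: 13; 39; 50];
 [:: 10; 41; 47];
 [:: 12; 41; 46];
 [:: 11; 42; 46];
 [:: 11; 41; 50];
 [:: 12; 44; 48];
 [:: 10; 38; 45];
 [:: 14; 39; 46];
 [:: 13; 43; 48];
 [:: 16; 39; 45];
 [:: 11; 38; 48];
 [:: 14; 42; 48];
 [:: 16; 41; 51];
 [:: 16; 42; 47];
 [:: 15; 38; 46];
 [:: 10; 44; 49];
 [:: 13; 40; 46];
 [:: 15; 41; 48];
 [:: 23; 29; 57];
 [:: 22; 26; 52];
 [:: 18; 26; 54];
 [:: 22; 29; 54];
 [:: 18; 25; 58];
 [:: 17; 30; 56];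
 [:: 17; 24; 52];
 [:: 21; 25; 53];
 [:: 23; 26; 55];
 [:: 20; 28; 52];
 [:: 20; 27; 56];
 [:: 19; 25; 54];
 [:: 19; 28; 56];
 [:: 21; 28; 55];
 [:: 17; 26; 58];
 [:: 20; 24; 54];
 [:: 22; 28; 58];
 [:: 20; 30; 58];
 [:: 21; 24; 57];
 [:: 19; 24; 58];
 [:: 22; 25; 56];
 [:: 18; 28; 53];
 [:: 23; 25; 52];
 [:: 21; 27; 52];
 [:: 19; 27; 53];
 [:: 18; 24; 55];
 [:: 17; 29; 53];
 [:: 21; 30; 54];
 [:: 19; 30; 55];
 [:: 18; 27; 57];
 [:: 20; 29; 55];
 [:: 22; 30; 57];
 [:: 17; 25; 55];
 [:: 23; 28; 54];
 [:: 23; 27; 58];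
 [:: 21; 26; 56];
 [:: 17; 28; 57];
 [:: 22; 24; 53];
 [:: 21; 29; 58];
 [:: 20; 26; 53];
 [:: 22; 27; 55];
 [:: 19; 26; 57];
 [:: 23; 24; 56];
 [:: 17; 27; 54];
 [:: 19; 29; 52];
 [:: 20; 25; 57];
 [:: 18; 30; 52];
 [:: 18; 29; 56];
 [:: 23; 30; 53];
 [:: 20; 36; 50];
 [:: 21; 31; 48];
 [:: 19; 37; 47];
 [:: 17; 34; 47];
 [:: 19; 36; 51];
 [:: 22; 32; 50];
 [:: 18; 33; 50];
 [:: 20; 33; 48];
 [:: 23; 33; 45];
 [:: 17; 31; 45];
 [:: 19; 33; 49];
 [:: 23; 37; 50];
 [:: 23; 36; 47];
 [:: 22; 35; 45];
 [:: 21; 37; 45];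
 [:: 17; 37; 49];
 [:: 22; 34; 49];
 [:: 18; 36; 45];
 [:: 23; 32; 49];
 [:: 23; 35; 51];
 [:: 22; 31; 47];
 [:: 17; 33; 51];
 [:: 18; 32; 47];
 [:: 21; 36; 49];
 [:: 20; 35; 47];
 [:: 22; 37; 51];
 [:: 21; 33; 47];
 [:: 21; 32; 51];
 [:: 19; 32; 46];
 [:: 19; 35; 48];
 [:: 17; 36; 46];
 [:: 20; 32; 45];
 [:: 20; 31; 49];
 [:: 18; 35; 49];
 [:: 20; 34; 51];
 [:: 19; 31; 50];
 [:: 23; 34; 48];
 [:: 17; 32; 48];
 [:: 17; 35; 50];
 [:: 18; 31; 51];
 [:: 23; 31; 46];
 [:: 22; 36; 48];
 [:: 21; 35; 46];
 [:: 19; 34; 45];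
 [:: 22; 33; 46];
 [:: 21; 34; 50];
 [:: 18; 34; 46];
 [:: 18; 37; 48];
 [:: 20; 37; 46];
 [:: 22; 41; 65];
 [:: 19; 40; 61];
 [:: 19; 39; 65];
 [:: 21; 39; 61];
 [:: 23; 43; 62];
 [:: 17; 42; 64];
 [:: 21; 42; 63];
 [:: 18; 39; 60];
 [:: 22; 38; 63];
 [:: 18; 42; 62];
 [:: 23; 40; 60];
 [:: 23; 39; 64];
 [:: 21; 38; 65];
 [:: 20; 43; 61];
 [:: 18; 38; 64];
 [:: 20; 40; 59];
 [:: 22; 44; 60];
 [:: 17; 44; 63];
 [:: 17; 38; 59];
 [:: 22; 43; 64];
 [:: 20; 39; 63];
 [:: 17; 41; 61];
 [:: 19; 42; 60];
 [:: 21; 44; 62];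
 [:: 18; 41; 59];
 [:: 22; 40; 62];
 [:: 20; 42; 65];
 [:: 19; 38; 62];
 [:: 21; 41; 60];
 [:: 23; 42; 59];
 [:: 19; 41; 64];
 [:: 17; 40; 65];
 [:: 18; 44; 61];
 [:: 18; 43; 65];
 [:: 23; 38; 61];
 [:: 23; 41; 63];
 [:: 21; 40; 64];
 [:: 23; 44; 65];
 [:: 18; 40; 63];
 [:: 17; 43; 60];
 [:: 20; 41; 62];
 [:: 22; 39; 59];
 [:: 20; 44; 64];
 [:: 19; 44; 59];
 [:: 20; 38; 60];
 [:: 19; 43; 63];
 [:: 21; 43; 59];
 [:: 17; 39; 62];
 [:: 22; 42; 61];
 [:: 25; 33; 42];
 [:: 30; 32; 43];
 [:: 24; 31; 38];
 [:: 26; 35; 39];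
 [:: 26; 34; 43];
 [:: 24; 34; 40];
 [:: 24; 37; 42];
 [:: 27; 32; 42];
 [:: 29; 35; 40];
 [:: 26; 31; 41];
 [:: 27; 35; 44];
 [:: 30; 35; 38];
 [:: 30; 34; 42];
 [:: 28; 34; 39];
 [:: 29; 34; 44];
 [:: 28; 37; 41];
 [:: 24; 33; 44];
 [:: 25; 32; 39];
 [:: 30; 31; 40];
 [:: 29; 31; 42];
 [:: 25; 35; 41];
 [:: 28; 33; 43];
 [:: 30; 37; 44];
 [:: 25; 31; 43];
 [:: 24; 36; 39];
 [:: 27; 34; 41];
 [:: 27; 37; 43];
 [:: 29; 37; 39];
 [:: 28; 36; 38];
 [:: 29; 36; 43];
 [:: 26; 37; 38];
 [:: 24; 32; 41];
 [:: 27; 31; 39];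
 [:: 26; 36; 42];
 [:: 24; 35; 43];
 [:: 25; 34; 38];
 [:: 29; 33; 41];
 [:: 25; 37; 40];
 [:: 26; 33; 40];
 [:: 28; 32; 40];
 [:: 30; 36; 41];
 [:: 28; 35; 42];
 [:: 27; 36; 40];
 [:: 30; 33; 39];
 [:: 26; 32; 44];
 [:: 28; 31; 44];
 [:: 25; 36; 44];
 [:: 27; 33; 38];
 [:: 29; 32; 38];
 [:: 45; 52; 59];
 [:: 45; 54; 62];
 [:: 47; 58; 60];
 [:: 50; 52; 60];
 [:: 48; 52; 61];
 [:: 46; 55; 63];
 [:: 46; 56; 61];
 [:: 51; 52; 63];
 [:: 49; 52; 64];
 [:: 47; 52; 65];
 [:: 45; 55; 60];
 [:: 45; 56; 65];
 [:: 48; 55; 62];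
 [:: 48; 54; 64];
 [:: 50; 54; 63];
 [:: 46; 57; 59];
 [:: 50; 55; 61];
 [:: 49; 53; 62];
 [:: 46; 58; 64];
 [:: 49; 55; 65];
 [:: 47; 53; 63];
 [:: 48; 53; 59];
 [:: 45; 57; 63];
 [:: 51; 53; 61];
 [:: 47; 54; 61];
 [:: 48; 57; 65];
 [:: 49; 54; 60];
 [:: 50; 57; 64];
 [:: 45; 58; 61];
 [:: 48; 56; 60];
 [:: 46; 52; 62];
 [:: 50; 56; 59];
 [:: 51; 54; 59];
 [:: 50; 58; 62];
 [:: 47; 55; 59];
 [:: 51; 55; 64];
 [:: 47; 56; 64];
 [:: 51; 56; 62];
 [:: 49; 56; 63];
 [:: 46; 53; 60];
 [:: 48; 58; 63];
 [:: 46; 54; 65];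
 [:: 45; 53; 64];
 [:: 49; 57; 61];
 [:: 47; 57; 62];
 [:: 51; 57; 60];
 [:: 49; 58; 59];
 [:: 51; 58; 65];
 [:: 50; 53; 65];
 [:: 0; 1; 2];
 [:: 1; 5; 6; 9];
 [:: 2; 7; 8; 9];
 [:: 0; 3; 4; 9];
 [:: 3; 5; 7];
 [:: 4; 6; 8];
 [:: 1; 4; 7];
 [:: 0; 5; 8];
 [:: 2; 3; 6];
 [:: 2; 4; 5];
 [:: 1; 3; 8];
 [:: 0; 6; 7];
 [:: 1; 12; 13; 16];
 [:: 2; 14; 15; 16];
 [:: 0; 10; 11; 16];
 [:: 10; 12; 14];
 [:: 11; 13; 15];
 [:: 1; 11; 14];
 [:: 0; 12; 15];
 [:: 2; 10; 13];
 [:: 2; 11; 12];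
 [:: 1; 10; 15];
 [:: 0; 13; 14];
 [:: 1; 19; 20; 23];
 [:: 2; 21; 22; 23];
 [:: 0; 17; 18; 23];
 [:: 17; 19; 21];
 [:: 18; 20; 22];
 [:: 1; 18; 21];
 [:: 0; 19; 22];
 [:: 2; 17; 20];
 [:: 2; 18; 19];
 [:: 1; 17; 22];
 [:: 0; 20; 21];
 [:: 1; 26; 27; 30];
 [:: 2; 28; 29; 30];
 [:: 0; 24; 25; 30];
 [:: 24; 26; 28];
 [:: 25; 27; 29];
 [:: 1; 25; 28];
 [:: 0; 26; 29];
 [:: 2; 24; 27];
 [:: 2; 25; 26];
 [:: 1; 24; 29];
 [:: 0; 27; 28];
 [:: 1; 33; 34; 37];
 [:: 2; 35; 36; 37];
 [:: 0; 31; 32; 37];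
 [:: 31; 33; 35];
 [:: 32; 34; 36];
 [:: 1; 32; 35];
 [:: 0; 33; 36];
 [:: 2; 31; 34];
 [:: 2; 32; 33];
 [:: 1; 31; 36];
 [:: 0; 34; 35];
 [:: 1; 40; 41; 44];
 [:: 2; 42; 43; 44];
 [:: 0; 38; 39; 44];
 [:: 38; 40; 42];
 [:: 39; 41; 43];
 [:: 1; 39; 42];
 [:: 0; 40; 43];
 [:: 2; 38; 41];
 [:: 2; 39; 40];
 [:: 1; 38; 43];
 [:: 0; 41; 42];
 [:: 1; 47; 48; 51];
 [:: 2; 49; 50; 51];
 [:: 0; 45; 46; 51];
 [:: 45; 47; 49];
 [:: 46; 48; 50];
 [:: 1; 46; 49];
 [:: 0; 47; 50];
 [:: 2; 45; 48];
 [:: 2; 46; 47];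
 [:: 1; 45; 50];
 [:: 0; 48; 49];
 [:: 1; 54; 55; 58];
 [:: 2; 56; 57; 58];
 [:: 0; 52; 53; 58];
 [:: 52; 54; 56];
 [:: 53; 55; 57];
 [:: 1; 53; 56];
 [:: 0; 54; 57];
 [:: 2; 52; 55];
 [:: 2; 53; 54];
 [:: 1; 52; 57];
 [:: 0; 55; 56];
 [:: 1; 61; 62; 65];
 [:: 2; 63; 64; 65];
 [:: 0; 59; 60; 65];
 [:: 59; 61; 63];
 [:: 60; 62; 64];
 [:: 1; 60; 63];
 [:: 0; 61; 64];
 [:: 2; 59; 62];
 [:: 2; 60; 61];
 [:: 1; 59; 64];
 [:: 0; 62; 63]].
Definition fl66 : seq (seq nat) := [:: [:: 0; 1; 2; 38; 39; 40; 41; 42; 43; 44];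
 [:: 4; 15; 18; 25; 34; 38; 46; 58; 64];
 [:: 5; 10; 22; 25; 37; 40; 51; 56; 62];
 [:: 5; 12; 20; 25; 34; 38; 51; 57; 60];
 [:: 5; 16; 23; 29; 32; 38; 49; 57; 61];
 [:: 9; 16; 19; 27; 33; 38; 49; 53; 62];
 [:: 8; 10; 19; 25; 34; 38; 45; 54; 62];
 [:: 3; 12; 22; 25; 36; 44; 48; 56; 60];
 [:: 4; 15; 18; 26; 35; 39; 49; 54; 60];
 [:: 6; 11; 20; 24; 37; 42; 46; 54; 65];
 [:: 8; 16; 20; 24; 31; 38; 49; 54; 60];
 [:: 5; 15; 17; 30; 31; 40; 45; 56; 65];
 [:: 3; 16; 18; 30; 35; 38; 49; 52; 64];
 [:: 4; 16; 17; 30; 34; 42; 47; 56; 64];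
 [:: 9; 14; 21; 30; 32; 43; 51; 54; 59];
 [:: 6; 14; 17; 30; 35; 38; 50; 56; 59];
 [:: 4; 12; 21; 28; 31; 44; 48; 55; 62];
 [:: 7; 15; 22; 28; 34; 39; 49; 58; 59];
 [:: 6; 15; 23; 28; 35; 42; 51; 54; 59];
 [:: 0; 1; 2; 3; 4; 5; 6; 7; 8; 9; 38; 39; 40; 41; 42; 43; 44; 52; 53; 54; 55; 56; 57; 58];
 [:: 4; 15; 18; 24; 33; 44; 50; 55; 61];
 [:: 8; 14; 22; 24; 34; 40; 49; 53; 62];
 [:: 6; 13; 18; 24; 34; 40; 46; 55; 63];
 [:: 5; 16; 23; 25; 35; 41; 51; 52; 63];
 [:: 7; 12; 18; 26; 33; 40; 50; 54; 63];
 [:: 3; 10; 17; 24; 31; 38; 45; 52; 59];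
 [:: 6; 16; 22; 24; 33; 44; 46; 53; 60];
 [:: 4; 16; 17; 29; 33; 41; 51; 53; 61];
 [:: 9; 10; 18; 27; 35; 44; 49; 57; 61];
 [:: 6; 11; 20; 25; 31; 43; 49; 57; 61];
 [:: 4; 16; 17; 28; 32; 40; 48; 57; 65];
 [:: 8; 15; 21; 24; 36; 39; 49; 57; 61];
 [:: 9; 11; 17; 30; 33; 39; 51; 56; 62];
 [:: 8; 11; 18; 27; 31; 39; 51; 57; 60];
 [:: 7; 13; 17; 24; 33; 44; 51; 52; 63];
 [:: 6; 14; 17; 29; 34; 44; 47; 53; 63];
 [:: 5; 15; 17; 28; 36; 38; 46; 57; 59];
 [:: 5; 11; 21; 25; 32; 39; 51; 53; 61];
 [:: 9; 11; 17; 25; 35; 41; 50; 55; 61];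
 [:: 9; 10; 18; 26; 34; 43; 46; 54; 65];
 [:: 8; 10; 19; 30; 32; 43; 46; 55; 63];
 [:: 7; 11; 19; 26; 31; 41; 50; 57; 64];
 [:: 4; 11; 22; 30; 31; 40; 47; 57; 62];
 [:: 9; 14; 21; 26; 35; 39; 46; 56; 61];
 [:: 8; 13; 23; 28; 36; 38; 47; 54; 61];
 [:: 3; 16; 18; 29; 34; 44; 46; 56; 61];
 [:: 9; 16; 19; 30; 36; 41; 51; 55; 64];
 [:: 0; 1; 2; 3; 4; 5; 6; 7; 8; 9];
 [:: 8; 12; 17; 29; 35; 40; 50; 53; 65];
 [:: 9; 13; 22; 27; 34; 41; 49; 55; 65];
 [:: 3; 16; 18; 25; 37; 40; 48; 58; 63];
 [:: 6; 10; 21; 27; 31; 39; 48; 52; 61];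
 [:: 0; 1; 2; 45; 46; 47; 48; 49; 50; 51];
 [:: 8; 11; 18; 24; 35; 43; 49; 55; 65];
 [:: 6; 11; 20; 30; 36; 41; 50; 58; 62];
 [:: 8; 15; 21; 25; 37; 40; 45; 53; 64];
 [:: 0; 1; 2];
 [:: 7; 12; 18; 27; 34; 41; 46; 57; 59];
 [:: 5; 10; 22; 28; 33; 43; 46; 58; 64];
 [:: 5; 14; 18; 30; 36; 41; 45; 52; 59];
 [:: 5; 13; 19; 28; 32; 40; 46; 56; 61];
 [:: 4; 12; 21; 25; 35; 41; 46; 53; 60];
 [:: 5; 10; 22; 30; 35; 38; 45; 57; 63];
 [:: 0; 1; 2; 10; 11; 12; 13; 14; 15; 16; 31; 32; 33; 34; 35; 36; 37; 52; 53; 54; 55; 56; 57; 58];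
 [:: 9; 13; 22; 28; 35; 42; 45; 58; 61];
 [:: 6; 12; 19; 24; 32; 41; 46; 58; 64];
 [:: 5; 11; 21; 30; 37; 44; 45; 54; 62];
 [:: 7; 10; 20; 30; 33; 39; 48; 58; 63];
 [:: 7; 12; 18; 24; 31; 38; 51; 55; 64];
 [:: 4; 14; 19; 25; 32; 39; 46; 54; 65];
 [:: 8; 12; 17; 25; 31; 43; 45; 55; 60];
 [:: 7; 13; 17; 26; 35; 39; 50; 58; 62];
 [:: 7; 13; 17; 29; 31; 42; 45; 53; 64];
 [:: 9; 13; 22; 30; 37; 44; 51; 57; 60];
 [:: 3; 14; 20; 27; 35; 44; 47; 56; 64];
 [:: 9; 12; 23; 30; 35; 38; 51; 53; 61];
 [:: 4; 13; 20; 27; 32; 42; 45; 56; 65];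
 [:: 5; 14; 18; 28; 34; 39; 46; 53; 60];
 [:: 9; 11; 17; 29; 32; 38; 48; 53; 59];
 [:: 5; 11; 21; 24; 31; 38; 48; 57; 65];
 [:: 3; 15; 19; 24; 34; 40; 45; 58; 61];
 [:: 7; 16; 21; 26; 34; 43; 50; 56; 59];
 [:: 6; 12; 19; 25; 33; 42; 49; 54; 60];
 [:: 6; 14; 17; 28; 33; 43; 51; 57; 60];
 [:: 0; 1; 2; 24; 25; 26; 27; 28; 29; 30; 31; 32; 33; 34; 35; 36; 37; 38; 39; 40; 41; 42; 43; 44];
 [:: 6; 14; 17; 24; 36; 39; 46; 52; 62];
 [:: 4; 15; 18; 30; 32; 43; 47; 52; 65];
 [:: 5; 13; 19; 25; 36; 44; 51; 54; 59];
 [:: 9; 16; 19; 26; 32; 44; 46; 57; 59];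
 [:: 3; 13; 21; 29; 35; 40; 46; 58; 64];
 [:: 0; 1; 2; 17; 18; 19; 20; 21; 22; 23; 31; 32; 33; 34; 35; 36; 37; 45; 46; 47; 48; 49; 50; 51];
 [:: 0; 1; 2; 24; 25; 26; 27; 28; 29; 30];
 [:: 8; 13; 23; 29; 37; 39; 50; 57; 64];
 [:: 5; 15; 17; 26; 34; 43; 47; 58; 60];
 [:: 8; 16; 20; 29; 36; 43; 50; 55; 61];
 [:: 7; 16; 21; 29; 37; 39; 45; 58; 61];
 [:: 3; 13; 21; 25; 31; 43; 48; 53; 59];
 [:: 4; 12; 21; 27; 37; 43; 45; 52; 59];
 [:: 8; 11; 18; 28; 32; 40; 47; 53; 63];
 [:: 3; 12; 22; 30; 34; 42; 49; 57; 61];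
 [:: 4; 12; 21; 24; 34; 40; 50; 57; 64];
 [:: 7; 15; 22; 26; 32; 44; 50; 52; 60];
 [:: 6; 12; 19; 29; 37; 39; 47; 52; 65];
 [:: 8; 13; 23; 26; 34; 43; 48; 55; 62];
 [:: 5; 11; 21; 28; 35; 42; 46; 55; 63];
 [:: 5; 11; 21; 29; 36; 43; 49; 58; 59];
 [:: 7; 10; 20; 24; 34; 40; 51; 54; 59];
 [:: 3; 12; 22; 24; 35; 43; 45; 53; 64];
 [:: 8; 10; 19; 28; 37; 41; 47; 56; 64];
 [:: 9; 12; 23; 25; 37; 40; 50; 52; 60];
 [:: 6; 10; 21; 26; 37; 38; 45; 56; 65];
 [:: 3; 10; 17; 25; 32; 39; 48; 55; 62];
 [:: 9; 15; 20; 26; 37; 38; 46; 53; 60];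
 [:: 7; 15; 22; 27; 33; 38; 46; 55; 63];
 [:: 9; 16; 19; 28; 34; 39; 45; 56; 65];
 [:: 3; 16; 18; 24; 36; 39; 45; 55; 60];
 [:: 4; 14; 19; 24; 31; 38; 50; 58; 62];
 [:: 8; 16; 20; 30; 37; 44; 46; 58; 64];
 [:: 5; 13; 19; 27; 31; 39; 50; 53; 65];
 [:: 9; 16; 19; 25; 31; 43; 50; 54; 63];
 [:: 0; 1; 2; 10; 11; 12; 13; 14; 15; 16];
 [:: 8; 15; 21; 29; 34; 44; 50; 58; 62];
 [:: 5; 13; 19; 24; 35; 43; 48; 58; 63];
 [:: 5; 14; 18; 25; 31; 43; 51; 58; 65];
 [:: 4; 12; 21; 29; 32; 38; 51; 58; 65];
 [:: 3; 14; 20; 25; 33; 42; 48; 57; 65];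
 [:: 5; 15; 17; 29; 37; 39; 49; 53; 62];
 [:: 9; 12; 23; 28; 33; 43; 45; 54; 62];
 [:: 7; 11; 19; 25; 37; 40; 47; 54; 61];
 [:: 5; 11; 21; 26; 33; 40; 47; 56; 64];
 [:: 9; 14; 21; 28; 37; 41; 45; 55; 60];
 [:: 4; 14; 19; 27; 34; 41; 45; 53; 64];
 [:: 7; 11; 19; 27; 32; 42; 46; 53; 60];
 [:: 5; 10; 22; 29; 34; 44; 49; 54; 60];
 [:: 0; 1; 2; 17; 18; 19; 20; 21; 22; 23];
 [:: 7; 11; 19; 29; 34; 44; 45; 52; 59];
 [:: 0; 1; 2; 17; 18; 19; 20; 21; 22; 23; 38; 39; 40; 41; 42; 43; 44; 59; 60; 61; 62; 63; 64; 65];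
 [:: 4; 11; 22; 24; 32; 41; 50; 53; 65];
 [:: 7; 14; 23; 30; 34; 42; 48; 53; 59];
 [:: 9; 15; 20; 29; 33; 41; 48; 55; 62];
 [:: 3; 15; 19; 27; 37; 43; 47; 53; 63];
 [:: 7; 10; 20; 28; 31; 44; 49; 52; 64];
 [:: 7; 15; 22; 30; 36; 41; 48; 57; 65];
 [:: 9; 12; 23; 26; 31; 41; 46; 55; 63];
 [:: 4; 10; 23; 26; 32; 44; 49; 55; 65];
 [:: 6; 10; 21; 24; 35; 43; 46; 57; 59];
 [:: 4; 11; 22; 29; 37; 39; 51; 54; 59];
 [:: 6; 12; 19; 28; 36; 38; 51; 56; 62];
 [:: 7; 10; 20; 26; 36; 42; 50; 53; 65];
 [:: 9; 13; 22; 26; 33; 40; 46; 52; 62];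
 [:: 8; 16; 20; 27; 34; 41; 51; 56; 62];
 [:: 0; 1; 2; 31; 32; 33; 34; 35; 36; 37];
 [:: 8; 10; 19; 27; 36; 40; 51; 53; 61];
 [:: 4; 13; 20; 26; 31; 41; 49; 53; 62];
 [:: 0; 1; 2; 3; 4; 5; 6; 7; 8; 9; 24; 25; 26; 27; 28; 29; 30; 45; 46; 47; 48; 49; 50; 51];
 [:: 3; 13; 21; 30; 36; 41; 49; 54; 60];
 [:: 4; 13; 20; 24; 36; 39; 50; 54; 63];
 [:: 9; 15; 20; 27; 31; 39; 49; 56; 63];
 [:: 6; 13; 18; 25; 35; 41; 49; 58; 59];
 [:: 4; 13; 20; 30; 35; 38; 47; 58; 60];
 [:: 6; 14; 17; 26; 31; 41; 45; 58; 61];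
 [:: 3; 10; 17; 29; 36; 43; 46; 53; 60];
 [:: 4; 10; 23; 28; 34; 39; 48; 54; 64];
 [:: 9; 14; 21; 29; 31; 42; 48; 58; 63];
 [:: 8; 13; 23; 30; 31; 40; 46; 53; 60];
 [:: 5; 12; 20; 29; 31; 42; 49; 55; 65];
 [:: 7; 15; 22; 24; 37; 42; 51; 53; 61];
 [:: 7; 13; 17; 25; 34; 38; 47; 55; 59];
 [:: 9; 12; 23; 24; 36; 39; 47; 56; 64];
 [:: 4; 13; 20; 25; 37; 40; 46; 57; 59];
 [:: 7; 13; 17; 27; 36; 40; 46; 54; 65];
 [:: 5; 12; 20; 30; 32; 43; 45; 58; 61];
 [:: 3; 13; 21; 27; 33; 38; 47; 52; 65];
 [:: 8; 11; 18; 30; 34; 42; 46; 52; 62];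
 [:: 5; 15; 17; 27; 35; 44; 50; 54; 63];
 [:: 8; 16; 20; 28; 35; 42; 47; 52; 65];
 [:: 7; 13; 17; 28; 37; 41; 49; 57; 61];
 [:: 3; 12; 22; 26; 37; 38; 51; 52; 63];
 [:: 4; 15; 18; 28; 37; 41; 48; 53; 59];
 [:: 6; 16; 22; 28; 37; 41; 51; 58; 65];
 [:: 7; 10; 20; 27; 37; 43; 46; 56; 61];
 [:: 5; 12; 20; 28; 37; 41; 46; 52; 62];
 [:: 3; 16; 18; 27; 32; 42; 47; 57; 62];
 [:: 4; 13; 20; 28; 33; 43; 48; 52; 61];
 [:: 8; 12; 17; 28; 34; 39; 47; 57; 62];
 [:: 6; 15; 23; 24; 31; 38; 46; 56; 61];
 [:: 6; 13; 18; 27; 37; 43; 48; 57; 65];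
 [:: 3; 10; 17; 28; 35; 42; 50; 57; 64];
 [:: 3; 16; 18; 28; 33; 43; 50; 53; 65];
 [:: 8; 15; 21; 26; 31; 41; 48; 56; 60];
 [:: 9; 14; 21; 25; 34; 38; 50; 53; 65];
 [:: 3; 15; 19; 26; 36; 42; 51; 57; 60];
 [:: 0; 1; 2; 10; 11; 12; 13; 14; 15; 16; 38; 39; 40; 41; 42; 43; 44; 45; 46; 47; 48; 49; 50; 51];
 [:: 7; 14; 23; 27; 31; 39; 46; 58; 64];
 [:: 6; 16; 22; 30; 32; 43; 50; 57; 64];
 [:: 8; 14; 22; 26; 36; 42; 48; 52; 61];
 [:: 7; 11; 19; 24; 36; 39; 51; 58; 65];
 [:: 4; 11; 22; 26; 34; 43; 49; 52; 64];
 [:: 8; 15; 21; 30; 35; 38; 46; 54; 65];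
 [:: 7; 16; 21; 28; 36; 38; 49; 55; 65];
 [:: 9; 10; 18; 30; 31; 40; 51; 52; 63];
 [:: 6; 12; 19; 30; 31; 40; 50; 55; 61];
 [:: 0; 1; 2; 17; 18; 19; 20; 21; 22; 23; 24; 25; 26; 27; 28; 29; 30; 52; 53; 54; 55; 56; 57; 58];
 [:: 3; 12; 22; 28; 32; 40; 50; 58; 62];
 [:: 8; 16; 20; 26; 33; 40; 48; 53; 59];
 [:: 7; 16; 21; 24; 32; 41; 51; 57; 60];
 [:: 5; 13; 19; 29; 33; 41; 49; 52; 64];
 [:: 3; 15; 19; 28; 31; 44; 50; 56; 59];
 [:: 7; 16; 21; 25; 33; 42; 47; 53; 63];
 [:: 4; 11; 22; 28; 36; 38; 48; 58; 63];
 [:: 3; 13; 21; 28; 34; 39; 50; 55; 61];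
 [:: 8; 14; 22; 28; 31; 44; 47; 58; 60];
 [:: 8; 10; 19; 26; 35; 39; 48; 57; 65];
 [:: 9; 11; 17; 27; 37; 43; 49; 54; 60];
 [:: 5; 15; 17; 24; 32; 41; 48; 52; 61];
 [:: 3; 13; 21; 24; 37; 42; 45; 57; 63];
 [:: 8; 11; 18; 25; 36; 44; 45; 58; 61];
 [:: 4; 10; 23; 29; 35; 40; 51; 57; 60];
 [:: 5; 14; 18; 27; 33; 38; 50; 57; 64];
 [:: 8; 14; 22; 29; 32; 38; 50; 54; 63];
 [:: 9; 14; 21; 24; 33; 44; 47; 57; 62];
 [:: 9; 15; 20; 30; 34; 42; 51; 58; 65];
 [:: 8; 12; 17; 30; 36; 41; 46; 56; 61];
 [:: 8; 10; 19; 29; 31; 42; 50; 52; 60];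
 [:: 4; 16; 17; 26; 37; 38; 49; 58; 59];
 [:: 8; 11; 18; 26; 37; 38; 48; 54; 64];
 [:: 7; 11; 19; 30; 35; 38; 48; 55; 62];
 [:: 9; 11; 17; 26; 36; 42; 46; 58; 64];
 [:: 3; 12; 22; 27; 31; 39; 47; 55; 59];
 [:: 4; 15; 18; 27; 36; 40; 45; 57; 63];
 [:: 5; 13; 19; 26; 37; 38; 47; 57; 62];
 [:: 0; 1; 2; 45; 46; 47; 48; 49; 50; 51; 52; 53; 54; 55; 56; 57; 58; 59; 60; 61; 62; 63; 64; 65];
 [:: 8; 15; 21; 27; 32; 42; 51; 52; 63];
 [:: 6; 13; 18; 30; 33; 39; 50; 52; 60];
 [:: 3; 11; 23; 28; 37; 41; 50; 54; 63];
 [:: 4; 10; 23; 25; 31; 43; 46; 52; 62];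
 [:: 6; 14; 17; 27; 32; 42; 48; 54; 64];
 [:: 5; 10; 22; 27; 32; 42; 50; 55; 61];
 [:: 5; 16; 23; 28; 31; 44; 46; 54; 65];
 [:: 7; 14; 23; 25; 36; 44; 47; 52; 65];
 [:: 9; 12; 23; 27; 32; 42; 49; 58; 59];
 [:: 4; 12; 21; 30; 33; 39; 47; 54; 61];
 [:: 9; 10; 18; 28; 36; 38; 45; 53; 64];
 [:: 3; 10; 17; 27; 34; 41; 47; 54; 61];
 [:: 3; 11; 23; 27; 36; 40; 47; 58; 60];
 [:: 6; 16; 22; 26; 35; 39; 45; 52; 59];
 [:: 6; 12; 19; 27; 35; 44; 48; 53; 59];
 [:: 7; 16; 21; 30; 31; 40; 48; 54; 64];
 [:: 7; 15; 22; 29; 35; 40; 45; 54; 62];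
 [:: 7; 10; 20; 29; 32; 38; 45; 55; 60];
 [:: 5; 14; 18; 26; 32; 44; 47; 54; 61];
 [:: 3; 14; 20; 29; 37; 39; 46; 55; 63];
 [:: 6; 10; 21; 25; 36; 44; 49; 53; 62];
 [:: 3; 11; 23; 26; 35; 39; 51; 55; 64];
 [:: 5; 12; 20; 26; 35; 39; 47; 53; 63];
 [:: 9; 15; 20; 28; 32; 40; 45; 52; 59];
 [:: 3; 13; 21; 26; 32; 44; 51; 56; 62];
 [:: 3; 14; 20; 30; 31; 40; 49; 58; 59];
 [:: 3; 15; 19; 30; 33; 39; 49; 55; 65];
 [:: 6; 16; 22; 25; 34; 38; 49; 56; 63];
 [:: 0; 1; 2; 52; 53; 54; 55; 56; 57; 58];
 [:: 3; 16; 18; 26; 31; 41; 51; 54; 59];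
 [:: 7; 16; 21; 27; 35; 44; 46; 52; 62];
 [:: 5; 11; 21; 27; 34; 41; 50; 52; 60];
 [:: 6; 11; 20; 29; 35; 40; 47; 55; 59];
 [:: 4; 14; 19; 28; 35; 42; 48; 56; 60];
 [:: 8; 14; 22; 30; 33; 39; 46; 57; 59];
 [:: 7; 14; 23; 24; 35; 43; 51; 56; 62];
 [:: 6; 15; 23; 29; 36; 43; 47; 57; 62];
 [:: 3; 11; 23; 24; 33; 44; 45; 56; 65];
 [:: 3; 11; 23; 30; 32; 43; 49; 53; 62];
 [:: 4; 14; 19; 30; 37; 44; 47; 55; 59];
 [:: 3; 15; 19; 25; 35; 41; 48; 54; 64];
 [:: 7; 15; 22; 25; 31; 43; 47; 56; 64];
 [:: 0; 1; 2; 59; 60; 61; 62; 63; 64; 65];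
 [:: 9; 11; 17; 24; 34; 40; 47; 52; 65];
 [:: 6; 15; 23; 27; 34; 41; 48; 58; 63];
 [:: 6; 13; 18; 28; 31; 44; 51; 53; 61];
 [:: 4; 14; 19; 26; 33; 40; 49; 57; 61];
 [:: 4; 10; 23; 27; 33; 38; 45; 58; 61];
 [:: 9; 14; 21; 27; 36; 40; 49; 52; 64];
 [:: 9; 15; 20; 24; 35; 43; 47; 54; 61];
 [:: 5; 15; 17; 25; 33; 42; 51; 55; 64];
 [:: 9; 10; 18; 24; 32; 41; 47; 55; 59];
 [:: 5; 14; 18; 24; 37; 42; 48; 55; 62];
 [:: 7; 11; 19; 28; 33; 43; 49; 56; 63];
 [:: 5; 16; 23; 30; 33; 39; 45; 53; 64];
 [:: 8; 15; 21; 28; 33; 43; 47; 55; 59];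
 [:: 5; 16; 23; 24; 34; 40; 48; 56; 60];
 [:: 9; 11; 17; 28; 31; 44; 45; 57; 63];
 [:: 5; 10; 22; 24; 36; 39; 48; 53; 59];
 [:: 7; 12; 18; 30; 37; 44; 48; 52; 61];
 [:: 4; 16; 17; 24; 35; 43; 50; 52; 60];
 [:: 7; 14; 23; 29; 33; 41; 45; 57; 63];
 [:: 4; 16; 17; 27; 31; 39; 45; 54; 62];
 [:: 6; 13; 18; 29; 32; 38; 47; 56; 64];
 [:: 8; 10; 19; 24; 33; 44; 49; 58; 59];
 [:: 9; 13; 22; 24; 31; 38; 47; 53; 63];
 [:: 6; 10; 21; 29; 33; 41; 47; 58; 60];
 [:: 6; 15; 23; 26; 33; 40; 45; 55; 60];
 [:: 4; 12; 21; 26; 36; 42; 49; 56; 63];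
 [:: 8; 14; 22; 25; 35; 41; 45; 56; 65];
 [:: 8; 12; 17; 26; 32; 44; 48; 58; 63];
 [:: 9; 10; 18; 29; 37; 39; 48; 56; 60];
 [:: 9; 12; 23; 29; 34; 44; 48; 57; 65];
 [:: 6; 11; 20; 28; 34; 39; 51; 52; 63];
 [:: 3; 11; 23; 29; 31; 42; 46; 57; 59];
 [:: 9; 16; 19; 29; 35; 40; 48; 52; 61];
 [:: 6; 16; 22; 27; 36; 40; 48; 55; 62];
 [:: 4; 11; 22; 25; 33; 42; 46; 56; 61];
 [:: 5; 16; 23; 27; 37; 43; 50; 58; 62];
 [:: 0; 1; 2; 3; 4; 5; 6; 7; 8; 9; 31; 32; 33; 34; 35; 36; 37; 59; 60; 61; 62; 63; 64; 65];
 [:: 8; 12; 17; 27; 33; 38; 51; 54; 59];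
 [:: 4; 11; 22; 27; 35; 44; 45; 55; 60];
 [:: 5; 12; 20; 27; 36; 40; 50; 56; 59];
 [:: 8; 16; 20; 25; 32; 39; 45; 57; 63];
 [:: 6; 10; 21; 28; 32; 40; 51; 55; 64];
 [:: 9; 10; 18; 25; 33; 42; 50; 58; 62];
 [:: 7; 12; 18; 28; 35; 42; 49; 53; 62];
 [:: 8; 12; 17; 24; 37; 42; 49; 52; 64];
 [:: 6; 15; 23; 30; 37; 44; 50; 53; 65];
 [:: 3; 15; 19; 29; 32; 38; 46; 52; 62];
 [:: 5; 16; 23; 26; 36; 42; 47; 55; 59];
 [:: 3; 12; 22; 29; 33; 41; 46; 54; 65];
 [:: 8; 13; 23; 25; 33; 42; 45; 52; 59];
 [:: 5; 13; 19; 30; 34; 42; 45; 55; 60];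
 [:: 6; 13; 18; 26; 36; 42; 45; 54; 62];
 [:: 9; 13; 22; 29; 36; 43; 48; 54; 64];
 [:: 5; 12; 20; 24; 33; 44; 48; 54; 64];
 [:: 4; 14; 19; 29; 36; 43; 51; 52; 63];
 [:: 7; 12; 18; 29; 36; 43; 45; 56; 65];
 [:: 7; 12; 18; 25; 32; 39; 47; 58; 60];
 [:: 4; 10; 23; 30; 36; 41; 47; 53; 63];
 [:: 7; 13; 17; 30; 32; 43; 48; 56; 60];
 [:: 6; 14; 17; 25; 37; 40; 49; 55; 65];
 [:: 7; 10; 20; 25; 35; 41; 47; 57; 62];
 [:: 6; 10; 21; 30; 34; 42; 50; 54; 63];
 [:: 3; 14; 20; 26; 34; 43; 51; 53; 61];
 [:: 8; 13; 23; 24; 32; 41; 49; 56; 63];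
 [:: 6; 12; 19; 26; 34; 43; 45; 57; 63];
 [:: 9; 16; 19; 24; 37; 42; 47; 58; 60];
 [:: 4; 10; 23; 24; 37; 42; 50; 56; 59];
 [:: 0; 1; 2; 10; 11; 12; 13; 14; 15; 16; 24; 25; 26; 27; 28; 29; 30; 59; 60; 61; 62; 63; 64; 65];
 [:: 3; 14; 20; 24; 32; 41; 45; 54; 62];
 [:: 8; 14; 22; 27; 37; 43; 51; 55; 64];
 [:: 3; 10; 17; 30; 37; 44; 49; 56; 63];
 [:: 5; 10; 22; 26; 31; 41; 47; 52; 65];
 [:: 5; 14; 18; 29; 35; 40; 49; 56; 63];
 [:: 6; 11; 20; 27; 33; 38; 48; 56; 60];
 [:: 7; 14; 23; 26; 37; 38; 50; 55; 61];
 [:: 4; 13; 20; 29; 34; 44; 51; 55; 64];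
 [:: 3; 14; 20; 28; 36; 38; 50; 52; 60];
 [:: 6; 15; 23; 25; 32; 39; 49; 52; 64];
 [:: 4; 15; 18; 29; 31; 42; 51; 56; 62];
 [:: 6; 16; 22; 29; 31; 42; 47; 54; 61];
 [:: 8; 13; 23; 27; 35; 44; 51; 58; 65];
 [:: 3; 10; 17; 26; 33; 40; 51; 58; 65];
 [:: 9; 15; 20; 25; 36; 44; 50; 57; 64];
 [:: 3; 11; 23; 25; 34; 38; 48; 52; 61];
 [:: 0; 1; 2; 3; 4; 5; 6; 7; 8; 9; 10; 11; 12; 13; 14; 15; 16; 17; 18; 19; 20; 21; 22; 23];
 [:: 6; 11; 20; 26; 32; 44; 45; 53; 64];
 [:: 4; 16; 17; 25; 36; 44; 46; 55; 63];
 [:: 9; 13; 22; 25; 32; 39; 50; 56; 59];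
 [:: 8; 11; 18; 29; 33; 41; 50; 56; 59];
 [:: 7; 14; 23; 28; 32; 40; 49; 54; 60]].
Definition s66 : seq nat := [:: 44; 62; 32; 7].
Definition k66 := 3.

Definition bl67 : seq (seq nat) := [:: [:: 10; 29; 36; 63];
 [:: 9; 29; 37; 65];
 [:: 8; 29; 35; 66];
 [:: 9; 27; 36; 66];
 [:: 10; 27; 37; 64];
 [:: 9; 28; 38; 63];
 [:: 7; 27; 35; 63];
 [:: 8; 30; 37; 63];
 [:: 8; 28; 36; 64];
 [:: 8; 27; 38; 65];
 [:: 7; 28; 37; 66];
 [:: 10; 30; 38; 66];
 [:: 10; 28; 35; 65];
 [:: 7; 29; 38; 64];
 [:: 9; 30; 35; 64];
 [:: 7; 30; 36; 65];
 [:: 16; 24; 36; 60];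
 [:: 16; 23; 38; 61];
 [:: 16; 26; 37; 59];
 [:: 18; 23; 37; 60];
 [:: 17; 23; 36; 62];
 [:: 15; 25; 38; 60];
 [:: 15; 24; 37; 62];
 [:: 18; 25; 36; 59];
 [:: 17; 24; 38; 59];
 [:: 17; 25; 37; 61];
 [:: 15; 23; 35; 59];
 [:: 18; 24; 35; 61];
 [:: 17; 26; 35; 60];
 [:: 18; 26; 38; 62];
 [:: 16; 25; 35; 62];
 [:: 15; 26; 36; 61];
 [:: 54; 55; 61; 64];
 [:: 51; 55; 59; 63];
 [:: 51; 56; 61; 66];
 [:: 53; 56; 62; 63];
 [:: 53; 58; 59; 64];
 [:: 52; 56; 60; 64];
 [:: 52; 55; 62; 65];
 [:: 52; 58; 61; 63];
 [:: 54; 57; 60; 63];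
 [:: 54; 56; 59; 65];
 [:: 51; 57; 62; 64];
 [:: 52; 57; 59; 66];
 [:: 51; 58; 60; 65];
 [:: 54; 58; 62; 66];
 [:: 53; 55; 60; 66];
 [:: 53; 57; 61; 65];
 [:: 4; 28; 48; 56];
 [:: 3; 30; 48; 57];
 [:: 5; 27; 48; 58];
 [:: 4; 27; 50; 57];
 [:: 5; 29; 49; 57];
 [:: 6; 30; 50; 58];
 [:: 5; 30; 47; 56];
 [:: 6; 29; 48; 55];
 [:: 4; 30; 49; 55];
 [:: 6; 28; 47; 57];
 [:: 4; 29; 47; 58];
 [:: 6; 27; 49; 56];
 [:: 3; 27; 47; 55];
 [:: 5; 28; 50; 55];
 [:: 3; 29; 50; 56];
 [:: 3; 28; 49; 58];
 [:: 17; 29; 41; 53];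
 [:: 18; 27; 41; 52];
 [:: 17; 28; 42; 51];
 [:: 16; 30; 41; 51];
 [:: 16; 28; 40; 52];
 [:: 18; 28; 39; 53];
 [:: 15; 27; 39; 51];
 [:: 16; 27; 42; 53];
 [:: 17; 27; 40; 54];
 [:: 17; 30; 39; 52];
 [:: 15; 29; 42; 52];
 [:: 15; 30; 40; 53];
 [:: 15; 28; 41; 54];
 [:: 18; 30; 42; 54];
 [:: 18; 29; 40; 51];
 [:: 16; 29; 39; 54];
 [:: 15; 31; 47; 63];
 [:: 17; 32; 50; 63];
 [:: 15; 33; 50; 64];
 [:: 16; 33; 47; 66];
 [:: 16; 31; 50; 65];
 [:: 16; 32; 48; 64];
 [:: 15; 32; 49; 66];
 [:: 18; 33; 48; 63];
 [:: 17; 31; 48; 66];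
 [:: 17; 33; 49; 65];
 [:: 17; 34; 47; 64];
 [:: 18; 32; 47; 65];
 [:: 16; 34; 49; 63];
 [:: 18; 31; 49; 64];
 [:: 15; 34; 48; 65];
 [:: 18; 34; 50; 66];
 [:: 18; 19; 45; 56];
 [:: 17; 21; 45; 57];
 [:: 16; 21; 43; 58];
 [:: 15; 21; 46; 56];
 [:: 16; 20; 44; 56];
 [:: 16; 22; 45; 55];
 [:: 15; 19; 43; 55];
 [:: 18; 21; 44; 55];
 [:: 17; 19; 44; 58];
 [:: 18; 20; 43; 57];
 [:: 17; 20; 46; 55];
 [:: 15; 20; 45; 58];
 [:: 15; 22; 44; 57];
 [:: 16; 19; 46; 57];
 [:: 17; 22; 43; 56];
 [:: 18; 22; 46; 58];
 [:: 4; 23; 46; 65];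
 [:: 5; 26; 43; 64];
 [:: 4; 26; 45; 63];
 [:: 6; 26; 46; 66];
 [:: 6; 24; 43; 65];
 [:: 6; 23; 45; 64];
 [:: 3; 23; 43; 63];
 [:: 3; 24; 45; 66];
 [:: 5; 25; 45; 65];
 [:: 3; 26; 44; 65];
 [:: 3; 25; 46; 64];
 [:: 5; 24; 46; 63];
 [:: 4; 25; 43; 66];
 [:: 5; 23; 44; 66];
 [:: 4; 24; 44; 64];
 [:: 6; 25; 44; 63];
 [:: 37; 42; 43; 48];
 [:: 35; 41; 46; 48];
 [:: 38; 42; 46; 50];
 [:: 36; 39; 46; 49];
 [:: 35; 42; 44; 49];
 [:: 36; 42; 45; 47];
 [:: 36; 40; 44; 48];
 [:: 37; 41; 45; 49];
 [:: 36; 41; 43; 50];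
 [:: 38; 41; 44; 47];
 [:: 37; 39; 44; 50];
 [:: 35; 39; 43; 47];
 [:: 38; 39; 45; 48];
 [:: 37; 40; 46; 47];
 [:: 38; 40; 43; 49];
 [:: 35; 40; 45; 50];
 [:: 6; 31; 41; 60];
 [:: 5; 34; 39; 60];
 [:: 5; 31; 40; 62];
 [:: 6; 34; 42; 62];
 [:: 4; 33; 39; 62];
 [:: 3; 33; 42; 60];
 [:: 3; 34; 40; 61];
 [:: 5; 33; 41; 61];
 [:: 4; 32; 40; 60];
 [:: 6; 33; 40; 59];
 [:: 4; 34; 41; 59];
 [:: 6; 32; 39; 61];
 [:: 5; 32; 42; 59];
 [:: 3; 31; 39; 59];
 [:: 3; 32; 41; 62];
 [:: 4; 31; 42; 61];
 [:: 21; 23; 28; 34];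
 [:: 19; 24; 29; 34];
 [:: 20; 25; 27; 34];
 [:: 20; 24; 28; 32];
 [:: 21; 25; 29; 33];
 [:: 20; 26; 29; 31];
 [:: 21; 24; 30; 31];
 [:: 22; 26; 30; 34];
 [:: 22; 23; 29; 32];
 [:: 19; 25; 30; 32];
 [:: 19; 23; 27; 31];
 [:: 22; 25; 28; 31];
 [:: 21; 26; 27; 32];
 [:: 20; 23; 30; 33];
 [:: 22; 24; 27; 33];
 [:: 19; 26; 28; 33];
 [:: 10; 31; 45; 52];
 [:: 9; 33; 45; 53];
 [:: 10; 32; 43; 53];
 [:: 7; 31; 43; 51];
 [:: 9; 32; 46; 51];
 [:: 8; 34; 45; 51];
 [:: 8; 31; 46; 53];
 [:: 8; 32; 44; 52];
 [:: 10; 33; 44; 51];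
 [:: 10; 34; 46; 54];
 [:: 7; 34; 44; 53];
 [:: 7; 33; 46; 52];
 [:: 8; 33; 43; 54];
 [:: 7; 32; 45; 54];
 [:: 9; 34; 43; 52];
 [:: 9; 31; 44; 54];
 [:: 8; 26; 41; 55];
 [:: 8; 25; 39; 58];
 [:: 10; 26; 42; 58];
 [:: 9; 23; 40; 58];
 [:: 9; 24; 42; 55];
 [:: 9; 25; 41; 57];
 [:: 8; 24; 40; 56];
 [:: 10; 24; 39; 57];
 [:: 10; 23; 41; 56];
 [:: 7; 25; 42; 56];
 [:: 10; 25; 40; 55];
 [:: 7; 23; 39; 55];
 [:: 7; 24; 41; 58];
 [:: 9; 26; 39; 56];
 [:: 8; 23; 42; 57];
 [:: 7; 26; 40; 57];
 [:: 12; 27; 46; 61];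
 [:: 11; 28; 45; 62];
 [:: 11; 30; 44; 61];
 [:: 12; 30; 45; 59];
 [:: 13; 30; 43; 60];
 [:: 14; 30; 46; 62];
 [:: 14; 29; 44; 59];
 [:: 13; 27; 44; 62];
 [:: 13; 29; 45; 61];
 [:: 12; 29; 43; 62];
 [:: 11; 27; 43; 59];
 [:: 13; 28; 46; 59];
 [:: 14; 27; 45; 60];
 [:: 12; 28; 44; 60];
 [:: 14; 28; 43; 61];
 [:: 11; 29; 46; 60];
 [:: 14; 32; 35; 57];
 [:: 14; 33; 36; 55];
 [:: 11; 31; 35; 55];
 [:: 14; 31; 37; 56];
 [:: 13; 32; 38; 55];
 [:: 13; 34; 35; 56];
 [:: 12; 31; 38; 57];
 [:: 11; 34; 36; 57];
 [:: 14; 34; 38; 58];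
 [:: 13; 31; 36; 58];
 [:: 11; 32; 37; 58];
 [:: 13; 33; 37; 57];
 [:: 11; 33; 38; 56];
 [:: 12; 33; 35; 58];
 [:: 12; 34; 37; 55];
 [:: 12; 32; 36; 56];
 [:: 14; 21; 40; 63];
 [:: 13; 22; 39; 64];
 [:: 11; 20; 41; 66];
 [:: 14; 22; 42; 66];
 [:: 14; 19; 41; 64];
 [:: 12; 19; 42; 65];
 [:: 11; 22; 40; 65];
 [:: 11; 21; 42; 64];
 [:: 13; 19; 40; 66];
 [:: 14; 20; 39; 65];
 [:: 13; 21; 41; 65];
 [:: 12; 21; 39; 66];
 [:: 13; 20; 42; 63];
 [:: 12; 22; 41; 63];
 [:: 12; 20; 40; 64];
 [:: 11; 19; 39; 63];
 [:: 3; 21; 38; 52];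
 [:: 5; 20; 38; 51];
 [:: 5; 21; 37; 53];
 [:: 4; 21; 35; 54];
 [:: 6; 19; 37; 52];
 [:: 4; 22; 37; 51];
 [:: 6; 20; 35; 53];
 [:: 5; 19; 36; 54];
 [:: 4; 20; 36; 52];
 [:: 6; 21; 36; 51];
 [:: 3; 22; 36; 53];
 [:: 3; 19; 35; 51];
 [:: 3; 20; 37; 54];
 [:: 5; 22; 35; 52];
 [:: 6; 22; 38; 54];
 [:: 4; 19; 38; 53];
 [:: 7; 19; 47; 59];
 [:: 10; 21; 48; 59];
 [:: 7; 20; 49; 62];
 [:: 9; 19; 48; 62];
 [:: 9; 22; 47; 60];
 [:: 9; 20; 50; 59];
 [:: 10; 19; 49; 60];
 [:: 10; 22; 50; 62];
 [:: 7; 22; 48; 61];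
 [:: 7; 21; 50; 60];
 [:: 9; 21; 49; 61];
 [:: 10; 20; 47; 61];
 [:: 8; 19; 50; 61];
 [:: 8; 21; 47; 62];
 [:: 8; 22; 49; 59];
 [:: 8; 20; 48; 60];
 [:: 3; 8; 13; 18];
 [:: 4; 7; 14; 17];
 [:: 6; 9; 12; 15];
 [:: 4; 9; 11; 18];
 [:: 5; 10; 11; 16];
 [:: 6; 7; 13; 16];
 [:: 6; 10; 14; 18];
 [:: 3; 10; 12; 17];
 [:: 3; 9; 14; 16];
 [:: 5; 7; 12; 18];
 [:: 5; 9; 13; 17];
 [:: 4; 10; 13; 15];
 [:: 5; 8; 14; 15];
 [:: 4; 8; 12; 16];
 [:: 6; 8; 11; 17];
 [:: 3; 7; 11; 15];
 [:: 11; 25; 50; 52];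
 [:: 11; 23; 47; 51];
 [:: 14; 23; 49; 52];
 [:: 12; 25; 47; 54];
 [:: 13; 26; 47; 52];
 [:: 11; 24; 49; 54];
 [:: 12; 23; 50; 53];
 [:: 11; 26; 48; 53];
 [:: 14; 25; 48; 51];
 [:: 14; 26; 50; 54];
 [:: 13; 25; 49; 53];
 [:: 13; 23; 48; 54];
 [:: 13; 24; 50; 51];
 [:: 12; 26; 49; 51];
 [:: 12; 24; 48; 52];
 [:: 14; 24; 47; 53];
 [:: 0; 1; 2];
 [:: 0; 3; 4];
 [:: 0; 5; 6];
 [:: 1; 3; 5];
 [:: 1; 4; 6];
 [:: 2; 3; 6];
 [:: 2; 4; 5];
 [:: 0; 7; 8];
 [:: 0; 9; 10];
 [:: 1; 7; 9];
 [:: 1; 8; 10];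
 [:: 2; 7; 10];
 [:: 2; 8; 9];
 [:: 0; 11; 12];
 [:: 0; 13; 14];
 [:: 1; 11; 13];
 [:: 1; 12; 14];
 [:: 2; 11; 14];
 [:: 2; 12; 13];
 [:: 0; 15; 16];
 [:: 0; 17; 18];
 [:: 1; 15; 17];
 [:: 1; 16; 18];
 [:: 2; 15; 18];
 [:: 2; 16; 17];
 [:: 0; 19; 20];
 [:: 0; 21; 22];
 [:: 1; 19; 21];
 [:: 1; 20; 22];
 [:: 2; 19; 22];
 [:: 2; 20; 21];
 [:: 0; 23; 24];
 [:: 0; 25; 26];
 [:: 1; 23; 25];
 [:: 1; 24; 26];
 [:: 2; 23; 26];
 [:: 2; 24; 25];
 [:: 0; 27; 28];
 [:: 0; 29; 30];
 [:: 1; 27; 29];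
 [:: 1; 28; 30];
 [:: 2; 27; 30];
 [:: 2; 28; 29];
 [:: 0; 31; 32];
 [:: 0; 33; 34];
 [:: 1; 31; 33];
 [:: 1; 32; 34];
 [:: 2; 31; 34];
 [:: 2; 32; 33];
 [:: 0; 35; 36];
 [:: 0; 37; 38];
 [:: 1; 35; 37];
 [:: 1; 36; 38];
 [:: 2; 35; 38];
 [:: 2; 36; 37];
 [:: 0; 39; 40];
 [:: 0; 41; 42];
 [:: 1; 39; 41];
 [:: 1; 40; 42];
 [:: 2; 39; 42];
 [:: 2; 40; 41];
 [:: 0; 43; 44];
 [:: 0; 45; 46];
 [:: 1; 43; 45];
 [:: 1; 44; 46];
 [:: 2; 43; 46];
 [:: 2; 44; 45];
 [:: 0; 47; 48];
 [:: 0; 49; 50];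
 [:: 1; 47; 49];
 [:: 1; 48; 50];
 [:: 2; 47; 50];
 [:: 2; 48; 49];
 [:: 0; 51; 52];
 [:: 0; 53; 54];
 [:: 1; 51; 53];
 [:: 1; 52; 54];
 [:: 2; 51; 54];
 [:: 2; 52; 53];
 [:: 0; 55; 56];
 [:: 0; 57; 58];
 [:: 1; 55; 57];
 [:: 1; 56; 58];
 [:: 2; 55; 58];
 [:: 2; 56; 57];
 [:: 0; 59; 60];
 [:: 0; 61; 62];
 [:: 1; 59; 61];
 [:: 1; 60; 62];
 [:: 2; 59; 62];
 [:: 2; 60; 61];
 [:: 0; 63; 64];
 [:: 0; 65; 66];
 [:: 1; 63; 65];
 [:: 1; 64; 66];
 [:: 2; 63; 66];
 [:: 2; 64; 65]].
Definition fl67 : seq (seq nat) := [:: [:: 0; 1; 2; 27; 28; 29; 30];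
 [:: 5; 8; 14; 15; 20; 25; 27; 34; 38; 39; 45; 48; 51; 58; 60; 65];
 [:: 6; 10; 14; 18; 21; 25; 29; 33; 36; 40; 44; 48; 51; 55; 59; 63];
 [:: 4; 7; 14; 17; 21; 26; 27; 32; 35; 40; 45; 50; 54; 57; 60; 63];
 [:: 5; 7; 12; 18; 21; 23; 28; 34; 37; 39; 44; 50; 53; 55; 60; 66];
 [:: 5; 9; 13; 17; 22; 26; 30; 34; 35; 39; 43; 47; 52; 56; 60; 64];
 [:: 0; 1; 2; 3; 4; 5; 6; 19; 20; 21; 22; 35; 36; 37; 38; 51; 52; 53; 54];
 [:: 0; 1; 2; 7; 8; 9; 10; 19; 20; 21; 22; 47; 48; 49; 50; 59; 60; 61; 62];
 [:: 0; 1; 2; 11; 12; 13; 14; 23; 24; 25; 26; 47; 48; 49; 50; 51; 52; 53; 54];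
 [:: 0; 1; 2; 19; 20; 21; 22; 23; 24; 25; 26; 27; 28; 29; 30; 31; 32; 33; 34];
 [:: 6; 7; 13; 16; 21; 24; 30; 31; 36; 41; 43; 50; 51; 58; 60; 65];
 [:: 5; 9; 13; 17; 21; 25; 29; 33; 37; 41; 45; 49; 53; 57; 61; 65];
 [:: 4; 7; 14; 17; 22; 25; 28; 31; 37; 42; 43; 48; 51; 56; 61; 66];
 [:: 3; 8; 13; 18; 21; 26; 27; 32; 38; 41; 44; 47; 52; 55; 62; 65];
 [:: 4; 9; 11; 18; 19; 26; 28; 33; 38; 39; 45; 48; 53; 56; 62; 63];
 [:: 0; 1; 2; 11; 12; 13; 14; 27; 28; 29; 30; 43; 44; 45; 46; 59; 60; 61; 62];
 [:: 0; 1; 2; 3; 4; 5; 6];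
 [:: 3; 7; 11; 15; 20; 24; 28; 32; 37; 41; 45; 49; 54; 58; 62; 66];
 [:: 3; 8; 13; 18; 19; 24; 29; 34; 35; 40; 45; 50; 51; 56; 61; 66];
 [:: 0; 1; 2; 3; 4; 5; 6; 31; 32; 33; 34; 39; 40; 41; 42; 59; 60; 61; 62];
 [:: 3; 10; 12; 17; 19; 26; 28; 33; 35; 42; 44; 49; 51; 58; 60; 65];
 [:: 0; 1; 2; 15; 16; 17; 18; 27; 28; 29; 30; 39; 40; 41; 42; 51; 52; 53; 54];
 [:: 4; 10; 13; 15; 19; 25; 30; 32; 38; 40; 43; 49; 53; 55; 60; 66];
 [:: 4; 9; 11; 18; 20; 25; 27; 34; 36; 41; 43; 50; 52; 57; 59; 66];
 [:: 6; 9; 12; 15; 20; 23; 30; 33; 35; 40; 45; 50; 53; 58; 59; 64];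
 [:: 0; 1; 2; 39; 40; 41; 42];
 [:: 0; 1; 2; 3; 4; 5; 6; 7; 8; 9; 10; 11; 12; 13; 14; 15; 16; 17; 18];
 [:: 6; 10; 14; 18; 19; 23; 27; 31; 37; 41; 45; 49; 52; 56; 60; 64];
 [:: 3; 9; 14; 16; 19; 25; 30; 32; 35; 41; 46; 48; 51; 57; 62; 64];
 [:: 0; 1; 2; 19; 20; 21; 22];
 [:: 4; 8; 12; 16; 22; 26; 30; 34; 37; 41; 45; 49; 51; 55; 59; 63];
 [:: 3; 9; 14; 16; 20; 26; 29; 31; 37; 39; 44; 50; 54; 56; 59; 65];
 [:: 6; 10; 14; 18; 22; 26; 30; 34; 38; 42; 46; 50; 54; 58; 62; 66];
 [:: 6; 9; 12; 15; 21; 26; 27; 32; 36; 39; 46; 49; 51; 56; 61; 66];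
 [:: 0; 1; 2; 3; 4; 5; 6; 23; 24; 25; 26; 43; 44; 45; 46; 63; 64; 65; 66];
 [:: 5; 10; 11; 16; 22; 25; 28; 31; 35; 40; 45; 50; 52; 55; 62; 65];
 [:: 0; 1; 2; 59; 60; 61; 62];
 [:: 4; 9; 11; 18; 22; 23; 29; 32; 37; 40; 46; 47; 51; 58; 60; 65];
 [:: 0; 1; 2; 15; 16; 17; 18; 19; 20; 21; 22; 43; 44; 45; 46; 55; 56; 57; 58];
 [:: 3; 7; 11; 15; 19; 23; 27; 31; 35; 39; 43; 47; 51; 55; 59; 63];
 [:: 3; 7; 11; 15; 21; 25; 29; 33; 38; 42; 46; 50; 52; 56; 60; 64];
 [:: 0; 1; 2; 35; 36; 37; 38];
 [:: 6; 8; 11; 17; 22; 24; 27; 33; 38; 40; 43; 49; 54; 56; 59; 65];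
 [:: 3; 9; 14; 16; 21; 23; 28; 34; 38; 40; 43; 49; 52; 58; 61; 63];
 [:: 0; 1; 2; 15; 16; 17; 18; 31; 32; 33; 34; 47; 48; 49; 50; 63; 64; 65; 66];
 [:: 4; 10; 13; 15; 21; 23; 28; 34; 35; 41; 46; 48; 54; 56; 59; 65];
 [:: 5; 10; 11; 16; 20; 23; 30; 33; 38; 41; 44; 47; 51; 56; 61; 66];
 [:: 0; 1; 2; 51; 52; 53; 54; 55; 56; 57; 58; 59; 60; 61; 62; 63; 64; 65; 66];
 [:: 5; 9; 13; 17; 19; 23; 27; 31; 36; 40; 44; 48; 54; 58; 62; 66];
 [:: 0; 1; 2; 23; 24; 25; 26];
 [:: 6; 9; 12; 15; 19; 24; 29; 34; 37; 42; 43; 48; 52; 55; 62; 65];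
 [:: 3; 10; 12; 17; 22; 23; 29; 32; 36; 41; 43; 50; 53; 56; 62; 63];
 [:: 4; 8; 12; 16; 20; 24; 28; 32; 36; 40; 44; 48; 52; 56; 60; 64];
 [:: 0; 1; 2; 35; 36; 37; 38; 39; 40; 41; 42; 43; 44; 45; 46; 47; 48; 49; 50];
 [:: 5; 10; 11; 16; 19; 24; 29; 34; 36; 39; 46; 49; 54; 57; 60; 63];
 [:: 6; 7; 13; 16; 19; 26; 28; 33; 37; 40; 46; 47; 52; 57; 59; 66];
 [:: 0; 1; 2; 3; 4; 5; 6; 27; 28; 29; 30; 47; 48; 49; 50; 55; 56; 57; 58];
 [:: 0; 1; 2; 7; 8; 9; 10; 23; 24; 25; 26; 39; 40; 41; 42; 55; 56; 57; 58];
 [:: 0; 1; 2; 51; 52; 53; 54];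
 [:: 4; 10; 13; 15; 20; 26; 29; 31; 36; 42; 45; 47; 52; 58; 61; 63];
 [:: 4; 10; 13; 15; 22; 24; 27; 33; 37; 39; 44; 50; 51; 57; 62; 64];
 [:: 5; 9; 13; 17; 20; 24; 28; 32; 38; 42; 46; 50; 51; 55; 59; 63];
 [:: 6; 9; 12; 15; 22; 25; 28; 31; 38; 41; 44; 47; 54; 57; 60; 63];
 [:: 0; 1; 2];
 [:: 4; 7; 14; 17; 19; 24; 29; 34; 38; 41; 44; 47; 53; 58; 59; 64];
 [:: 0; 1; 2; 43; 44; 45; 46];
 [:: 5; 8; 14; 15; 22; 23; 29; 32; 35; 42; 44; 49; 52; 57; 59; 66];
 [:: 6; 7; 13; 16; 22; 23; 29; 32; 38; 39; 45; 48; 54; 55; 61; 64];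
 [:: 4; 8; 12; 16; 19; 23; 27; 31; 38; 42; 46; 50; 53; 57; 61; 65];
 [:: 5; 7; 12; 18; 19; 25; 30; 32; 36; 42; 45; 47; 54; 56; 59; 65];
 [:: 0; 1; 2; 7; 8; 9; 10];
 [:: 5; 8; 14; 15; 21; 24; 30; 31; 37; 40; 46; 47; 53; 56; 62; 63];
 [:: 4; 9; 11; 18; 21; 24; 30; 31; 35; 42; 44; 49; 54; 55; 61; 64];
 [:: 0; 1; 2; 7; 8; 9; 10; 31; 32; 33; 34; 43; 44; 45; 46; 51; 52; 53; 54];
 [:: 3; 7; 11; 15; 22; 26; 30; 34; 36; 40; 44; 48; 53; 57; 61; 65];
 [:: 0; 1; 2; 11; 12; 13; 14; 19; 20; 21; 22; 39; 40; 41; 42; 63; 64; 65; 66];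
 [:: 0; 1; 2; 11; 12; 13; 14; 31; 32; 33; 34; 35; 36; 37; 38; 55; 56; 57; 58];
 [:: 0; 1; 2; 7; 8; 9; 10; 27; 28; 29; 30; 35; 36; 37; 38; 63; 64; 65; 66];
 [:: 6; 10; 14; 18; 20; 24; 28; 32; 35; 39; 43; 47; 53; 57; 61; 65];
 [:: 3; 10; 12; 17; 20; 25; 27; 34; 37; 40; 46; 47; 54; 55; 61; 64];
 [:: 5; 10; 11; 16; 21; 26; 27; 32; 37; 42; 43; 48; 53; 58; 59; 64];
 [:: 6; 8; 11; 17; 21; 23; 28; 34; 36; 42; 45; 47; 51; 57; 62; 64];
 [:: 0; 1; 2; 63; 64; 65; 66];
 [:: 6; 8; 11; 17; 20; 26; 29; 31; 35; 41; 46; 48; 53; 55; 60; 66];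
 [:: 4; 8; 12; 16; 21; 25; 29; 33; 35; 39; 43; 47; 54; 58; 62; 66];
 [:: 3; 10; 12; 17; 21; 24; 30; 31; 38; 39; 45; 48; 52; 57; 59; 66];
 [:: 0; 1; 2; 15; 16; 17; 18; 23; 24; 25; 26; 35; 36; 37; 38; 59; 60; 61; 62];
 [:: 3; 8; 13; 18; 20; 23; 30; 33; 37; 42; 43; 48; 54; 57; 60; 63];
 [:: 6; 7; 13; 16; 20; 25; 27; 34; 35; 42; 44; 49; 53; 56; 62; 63];
 [:: 0; 1; 2; 11; 12; 13; 14];
 [:: 0; 1; 2; 15; 16; 17; 18];
 [:: 0; 1; 2; 47; 48; 49; 50];
 [:: 3; 8; 13; 18; 22; 25; 28; 31; 36; 39; 46; 49; 53; 58; 59; 64];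
 [:: 0; 1; 2; 55; 56; 57; 58];
 [:: 6; 8; 11; 17; 19; 25; 30; 32; 37; 39; 44; 50; 52; 58; 61; 63];
 [:: 5; 8; 14; 15; 19; 26; 28; 33; 36; 41; 43; 50; 54; 55; 61; 64];
 [:: 0; 1; 2; 31; 32; 33; 34];
 [:: 5; 7; 12; 18; 22; 24; 27; 33; 35; 41; 46; 48; 52; 58; 61; 63];
 [:: 5; 7; 12; 18; 20; 26; 29; 31; 38; 40; 43; 49; 51; 57; 62; 64];
 [:: 3; 9; 14; 16; 22; 24; 27; 33; 36; 42; 45; 47; 53; 55; 60; 66];
 [:: 4; 7; 14; 17; 20; 23; 30; 33; 36; 39; 46; 49; 52; 55; 62; 65]].
Definition s67 : seq nat := [:: 61; 36; 18; 27].
Definition k67 := 3.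

Definition bl76 : seq (seq nat) := [:: [:: 0; 1; 2; 3];
 [:: 67; 0; 4];
 [:: 67; 8; 12];
 [:: 68; 0; 8];
 [:: 68; 4; 12];
 [:: 69; 0; 12];
 [:: 69; 4; 8];
 [:: 0; 5; 10; 15];
 [:: 0; 6; 11; 13];
 [:: 0; 7; 9; 14];
 [:: 64; 0; 16];
 [:: 64; 32; 48];
 [:: 65; 0; 32];
 [:: 65; 16; 48];
 [:: 66; 0; 48];
 [:: 66; 16; 32];
 [:: 0; 17; 34; 51];
 [:: 0; 18; 35; 49];
 [:: 0; 19; 33; 50];
 [:: 70; 0; 20];
 [:: 70; 40; 60];
 [:: 71; 0; 40];
 [:: 71; 20; 60];
 [:: 72; 0; 60];
 [:: 72; 20; 40];
 [:: 0; 21; 42; 63];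
 [:: 0; 22; 43; 61];
 [:: 0; 23; 41; 62];
 [:: 73; 0; 24];
 [:: 73; 44; 52];
 [:: 74; 0; 44];
 [:: 74; 24; 52];
 [:: 75; 0; 52];
 [:: 75; 24; 44];
 [:: 0; 25; 46; 55];
 [:: 0; 26; 47; 53];
 [:: 0; 27; 45; 54];
 [:: 0; 28; 36; 56];
 [:: 0; 29; 38; 59];
 [:: 0; 30; 39; 57];
 [:: 0; 31; 37; 58];
 [:: 1; 4; 11; 14];
 [:: 67; 1; 5];
 [:: 67; 9; 13];
 [:: 68; 1; 9];
 [:: 68; 5; 13];
 [:: 69; 1; 13];
 [:: 69; 5; 9];
 [:: 1; 6; 8; 15];
 [:: 1; 7; 10; 12];
 [:: 1; 16; 35; 50];
 [:: 64; 1; 17];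
 [:: 64; 33; 49];
 [:: 65; 1; 33];
 [:: 65; 17; 49];
 [:: 66; 1; 49];
 [:: 66; 17; 33];
 [:: 1; 18; 32; 51];
 [:: 1; 19; 34; 48];
 [:: 1; 20; 43; 62];
 [:: 70; 1; 21];
 [:: 70; 41; 61];
 [:: 71; 1; 41];
 [:: 71; 21; 61];
 [:: 72; 1; 61];
 [:: 72; 21; 41];
 [:: 1; 22; 40; 63];
 [:: 1; 23; 42; 60];
 [:: 1; 24; 47; 54];
 [:: 73; 1; 25];
 [:: 73; 45; 53];
 [:: 74; 1; 45];
 [:: 74; 25; 53];
 [:: 75; 1; 53];
 [:: 75; 25; 45];
 [:: 1; 26; 44; 55];
 [:: 1; 27; 46; 52];
 [:: 1; 28; 39; 58];
 [:: 1; 29; 37; 57];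
 [:: 1; 30; 36; 59];
 [:: 1; 31; 38; 56];
 [:: 2; 4; 9; 15];
 [:: 2; 5; 11; 12];
 [:: 67; 2; 6];
 [:: 67; 10; 14];
 [:: 68; 2; 10];
 [:: 68; 6; 14];
 [:: 69; 2; 14];
 [:: 69; 6; 10];
 [:: 2; 7; 8; 13];
 [:: 2; 16; 33; 51];
 [:: 2; 17; 35; 48];
 [:: 64; 2; 18];
 [:: 64; 34; 50];
 [:: 65; 2; 34];
 [:: 65; 18; 50];
 [:: 66; 2; 50];
 [:: 66; 18; 34];
 [:: 2; 19; 32; 49];
 [:: 2; 20; 41; 63];
 [:: 2; 21; 43; 60];
 [:: 70; 2; 22];
 [:: 70; 42; 62];
 [:: 71; 2; 42];
 [:: 71; 22; 62];
 [:: 72; 2; 62];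
 [:: 72; 22; 42];
 [:: 2; 23; 40; 61];
 [:: 2; 24; 45; 55];
 [:: 2; 25; 47; 52];
 [:: 73; 2; 26];
 [:: 73; 46; 54];
 [:: 74; 2; 46];
 [:: 74; 26; 54];
 [:: 75; 2; 54];
 [:: 75; 26; 46];
 [:: 2; 27; 44; 53];
 [:: 2; 28; 37; 59];
 [:: 2; 29; 39; 56];
 [:: 2; 30; 38; 58];
 [:: 2; 31; 36; 57];
 [:: 3; 4; 10; 13];
 [:: 3; 5; 8; 14];
 [:: 3; 6; 9; 12];
 [:: 67; 3; 7];
 [:: 67; 11; 15];
 [:: 68; 3; 11];
 [:: 68; 7; 15];
 [:: 69; 3; 15];
 [:: 69; 7; 11];
 [:: 3; 16; 34; 49];
 [:: 3; 17; 32; 50];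
 [:: 3; 18; 33; 48];
 [:: 64; 3; 19];
 [:: 64; 35; 51];
 [:: 65; 3; 35];
 [:: 65; 19; 51];
 [:: 66; 3; 51];
 [:: 66; 19; 35];
 [:: 3; 20; 42; 61];
 [:: 3; 21; 40; 62];
 [:: 3; 22; 41; 60];
 [:: 70; 3; 23];
 [:: 70; 43; 63];
 [:: 71; 3; 43];
 [:: 71; 23; 63];
 [:: 72; 3; 63];
 [:: 72; 23; 43];
 [:: 3; 24; 46; 53];
 [:: 3; 25; 44; 54];
 [:: 3; 26; 45; 52];
 [:: 73; 3; 27];
 [:: 73; 47; 55];
 [:: 74; 3; 47];
 [:: 74; 27; 55];
 [:: 75; 3; 55];
 [:: 75; 27; 47];
 [:: 3; 28; 38; 57];
 [:: 3; 29; 36; 58];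
 [:: 3; 30; 37; 56];
 [:: 3; 31; 39; 59];
 [:: 4; 5; 6; 7];
 [:: 70; 4; 16];
 [:: 70; 44; 56];
 [:: 71; 4; 44];
 [:: 71; 16; 56];
 [:: 72; 4; 56];
 [:: 72; 16; 44];
 [:: 4; 17; 46; 59];
 [:: 4; 18; 47; 57];
 [:: 4; 19; 45; 58];
 [:: 64; 4; 20];
 [:: 64; 36; 52];
 [:: 65; 4; 36];
 [:: 65; 20; 52];
 [:: 66; 4; 52];
 [:: 66; 20; 36];
 [:: 4; 21; 38; 55];
 [:: 4; 22; 39; 53];
 [:: 4; 23; 37; 54];
 [:: 4; 24; 32; 60];
 [:: 4; 25; 34; 63];
 [:: 4; 26; 35; 61];
 [:: 4; 27; 33; 62];
 [:: 73; 4; 28];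
 [:: 73; 40; 48];
 [:: 74; 4; 40];
 [:: 74; 28; 48];
 [:: 75; 4; 48];
 [:: 75; 28; 40];
 [:: 4; 29; 42; 51];
 [:: 4; 30; 43; 49];
 [:: 4; 31; 41; 50];
 [:: 5; 16; 47; 58];
 [:: 70; 5; 17];
 [:: 70; 45; 57];
 [:: 71; 5; 45];
 [:: 71; 17; 57];
 [:: 72; 5; 57];
 [:: 72; 17; 45];
 [:: 5; 18; 44; 59];
 [:: 5; 19; 46; 56];
 [:: 5; 20; 39; 54];
 [:: 64; 5; 21];
 [:: 64; 37; 53];
 [:: 65; 5; 37];
 [:: 65; 21; 53];
 [:: 66; 5; 53];
 [:: 66; 21; 37];
 [:: 5; 22; 36; 55];
 [:: 5; 23; 38; 52];
 [:: 5; 24; 35; 62];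
 [:: 5; 25; 33; 61];
 [:: 5; 26; 32; 63];
 [:: 5; 27; 34; 60];
 [:: 5; 28; 43; 50];
 [:: 73; 5; 29];
 [:: 73; 41; 49];
 [:: 74; 5; 41];
 [:: 74; 29; 49];
 [:: 75; 5; 49];
 [:: 75; 29; 41];
 [:: 5; 30; 40; 51];
 [:: 5; 31; 42; 48];
 [:: 6; 16; 45; 59];
 [:: 6; 17; 47; 56];
 [:: 70; 6; 18];
 [:: 70; 46; 58];
 [:: 71; 6; 46];
 [:: 71; 18; 58];
 [:: 72; 6; 58];
 [:: 72; 18; 46];
 [:: 6; 19; 44; 57];
 [:: 6; 20; 37; 55];
 [:: 6; 21; 39; 52];
 [:: 64; 6; 22];
 [:: 64; 38; 54];
 [:: 65; 6; 38];
 [:: 65; 22; 54];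
 [:: 66; 6; 54];
 [:: 66; 22; 38];
 [:: 6; 23; 36; 53];
 [:: 6; 24; 33; 63];
 [:: 6; 25; 35; 60];
 [:: 6; 26; 34; 62];
 [:: 6; 27; 32; 61];
 [:: 6; 28; 41; 51];
 [:: 6; 29; 43; 48];
 [:: 73; 6; 30];
 [:: 73; 42; 50];
 [:: 74; 6; 42];
 [:: 74; 30; 50];
 [:: 75; 6; 50];
 [:: 75; 30; 42];
 [:: 6; 31; 40; 49];
 [:: 7; 16; 46; 57];
 [:: 7; 17; 44; 58];
 [:: 7; 18; 45; 56];
 [:: 70; 7; 19];
 [:: 70; 47; 59];
 [:: 71; 7; 47];
 [:: 71; 19; 59];
 [:: 72; 7; 59];
 [:: 72; 19; 47];
 [:: 7; 20; 38; 53];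
 [:: 7; 21; 36; 54];
 [:: 7; 22; 37; 52];
 [:: 64; 7; 23];
 [:: 64; 39; 55];
 [:: 65; 7; 39];
 [:: 65; 23; 55];
 [:: 66; 7; 55];
 [:: 66; 23; 39];
 [:: 7; 24; 34; 61];
 [:: 7; 25; 32; 62];
 [:: 7; 26; 33; 60];
 [:: 7; 27; 35; 63];
 [:: 7; 28; 42; 49];
 [:: 7; 29; 40; 50];
 [:: 7; 30; 41; 48];
 [:: 73; 7; 31];
 [:: 73; 43; 51];
 [:: 74; 7; 43];
 [:: 74; 31; 51];
 [:: 75; 7; 51];
 [:: 75; 31; 43];
 [:: 8; 9; 10; 11];
 [:: 73; 8; 16];
 [:: 73; 36; 60];
 [:: 74; 8; 36];
 [:: 74; 16; 60];
 [:: 75; 8; 60];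
 [:: 75; 16; 36];
 [:: 8; 17; 38; 63];
 [:: 8; 18; 39; 61];
 [:: 8; 19; 37; 62];
 [:: 8; 20; 44; 48];
 [:: 8; 21; 46; 51];
 [:: 8; 22; 47; 49];
 [:: 8; 23; 45; 50];
 [:: 64; 8; 24];
 [:: 64; 40; 56];
 [:: 65; 8; 40];
 [:: 65; 24; 56];
 [:: 66; 8; 56];
 [:: 66; 24; 40];
 [:: 8; 25; 42; 59];
 [:: 8; 26; 43; 57];
 [:: 8; 27; 41; 58];
 [:: 70; 8; 28];
 [:: 70; 32; 52];
 [:: 71; 8; 32];
 [:: 71; 28; 52];
 [:: 72; 8; 52];
 [:: 72; 28; 32];
 [:: 8; 29; 34; 55];
 [:: 8; 30; 35; 53];
 [:: 8; 31; 33; 54];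
 [:: 9; 16; 39; 62];
 [:: 73; 9; 17];
 [:: 73; 37; 61];
 [:: 74; 9; 37];
 [:: 74; 17; 61];
 [:: 75; 9; 61];
 [:: 75; 17; 37];
 [:: 9; 18; 36; 63];
 [:: 9; 19; 38; 60];
 [:: 9; 20; 47; 50];
 [:: 9; 21; 45; 49];
 [:: 9; 22; 44; 51];
 [:: 9; 23; 46; 48];
 [:: 9; 24; 43; 58];
 [:: 64; 9; 25];
 [:: 64; 41; 57];
 [:: 65; 9; 41];
 [:: 65; 25; 57];
 [:: 66; 9; 57];
 [:: 66; 25; 41];
 [:: 9; 26; 40; 59];
 [:: 9; 27; 42; 56];
 [:: 9; 28; 35; 54];
 [:: 70; 9; 29];
 [:: 70; 33; 53];
 [:: 71; 9; 33];
 [:: 71; 29; 53];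
 [:: 72; 9; 53];
 [:: 72; 29; 33];
 [:: 9; 30; 32; 55];
 [:: 9; 31; 34; 52];
 [:: 10; 16; 37; 63];
 [:: 10; 17; 39; 60];
 [:: 73; 10; 18];
 [:: 73; 38; 62];
 [:: 74; 10; 38];
 [:: 74; 18; 62];
 [:: 75; 10; 62];
 [:: 75; 18; 38];
 [:: 10; 19; 36; 61];
 [:: 10; 20; 45; 51];
 [:: 10; 21; 47; 48];
 [:: 10; 22; 46; 50];
 [:: 10; 23; 44; 49];
 [:: 10; 24; 41; 59];
 [:: 10; 25; 43; 56];
 [:: 64; 10; 26];
 [:: 64; 42; 58];
 [:: 65; 10; 42];
 [:: 65; 26; 58];
 [:: 66; 10; 58];
 [:: 66; 26; 42];
 [:: 10; 27; 40; 57];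
 [:: 10; 28; 33; 55];
 [:: 10; 29; 35; 52];
 [:: 70; 10; 30];
 [:: 70; 34; 54];
 [:: 71; 10; 34];
 [:: 71; 30; 54];
 [:: 72; 10; 54];
 [:: 72; 30; 34];
 [:: 10; 31; 32; 53];
 [:: 11; 16; 38; 61];
 [:: 11; 17; 36; 62];
 [:: 11; 18; 37; 60];
 [:: 73; 11; 19];
 [:: 73; 39; 63];
 [:: 74; 11; 39];
 [:: 74; 19; 63];
 [:: 75; 11; 63];
 [:: 75; 19; 39];
 [:: 11; 20; 46; 49];
 [:: 11; 21; 44; 50];
 [:: 11; 22; 45; 48];
 [:: 11; 23; 47; 51];
 [:: 11; 24; 42; 57];
 [:: 11; 25; 40; 58];
 [:: 11; 26; 41; 56];
 [:: 64; 11; 27];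
 [:: 64; 43; 59];
 [:: 65; 11; 43];
 [:: 65; 27; 59];
 [:: 66; 11; 59];
 [:: 66; 27; 43];
 [:: 11; 28; 34; 53];
 [:: 11; 29; 32; 54];
 [:: 11; 30; 33; 52];
 [:: 70; 11; 31];
 [:: 70; 35; 55];
 [:: 71; 11; 35];
 [:: 71; 31; 55];
 [:: 72; 11; 55];
 [:: 72; 31; 35];
 [:: 12; 13; 14; 15];
 [:: 12; 16; 40; 52];
 [:: 12; 17; 42; 55];
 [:: 12; 18; 43; 53];
 [:: 12; 19; 41; 54];
 [:: 73; 12; 20];
 [:: 73; 32; 56];
 [:: 74; 12; 32];
 [:: 74; 20; 56];
 [:: 75; 12; 56];
 [:: 75; 20; 32];
 [:: 12; 21; 34; 59];
 [:: 12; 22; 35; 57];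
 [:: 12; 23; 33; 58];
 [:: 70; 12; 24];
 [:: 70; 36; 48];
 [:: 71; 12; 36];
 [:: 71; 24; 48];
 [:: 72; 12; 48];
 [:: 72; 24; 36];
 [:: 12; 25; 38; 51];
 [:: 12; 26; 39; 49];
 [:: 12; 27; 37; 50];
 [:: 64; 12; 28];
 [:: 64; 44; 60];
 [:: 65; 12; 44];
 [:: 65; 28; 60];
 [:: 66; 12; 60];
 [:: 66; 28; 44];
 [:: 12; 29; 46; 63];
 [:: 12; 30; 47; 61];
 [:: 12; 31; 45; 62];
 [:: 13; 16; 43; 54];
 [:: 13; 17; 41; 53];
 [:: 13; 18; 40; 55];
 [:: 13; 19; 42; 52];
 [:: 13; 20; 35; 58];
 [:: 73; 13; 21];
 [:: 73; 33; 57];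
 [:: 74; 13; 33];
 [:: 74; 21; 57];
 [:: 75; 13; 57];
 [:: 75; 21; 33];
 [:: 13; 22; 32; 59];
 [:: 13; 23; 34; 56];
 [:: 13; 24; 39; 50];
 [:: 70; 13; 25];
 [:: 70; 37; 49];
 [:: 71; 13; 37];
 [:: 71; 25; 49];
 [:: 72; 13; 49];
 [:: 72; 25; 37];
 [:: 13; 26; 36; 51];
 [:: 13; 27; 38; 48];
 [:: 13; 28; 47; 62];
 [:: 64; 13; 29];
 [:: 64; 45; 61];
 [:: 65; 13; 45];
 [:: 65; 29; 61];
 [:: 66; 13; 61];
 [:: 66; 29; 45];
 [:: 13; 30; 44; 63];
 [:: 13; 31; 46; 60];
 [:: 14; 16; 41; 55];
 [:: 14; 17; 43; 52];
 [:: 14; 18; 42; 54];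
 [:: 14; 19; 40; 53];
 [:: 14; 20; 33; 59];
 [:: 14; 21; 35; 56];
 [:: 73; 14; 22];
 [:: 73; 34; 58];
 [:: 74; 14; 34];
 [:: 74; 22; 58];
 [:: 75; 14; 58];
 [:: 75; 22; 34];
 [:: 14; 23; 32; 57];
 [:: 14; 24; 37; 51];
 [:: 14; 25; 39; 48];
 [:: 70; 14; 26];
 [:: 70; 38; 50];
 [:: 71; 14; 38];
 [:: 71; 26; 50];
 [:: 72; 14; 50];
 [:: 72; 26; 38];
 [:: 14; 27; 36; 49];
 [:: 14; 28; 45; 63];
 [:: 14; 29; 47; 60];
 [:: 64; 14; 30];
 [:: 64; 46; 62];
 [:: 65; 14; 46];
 [:: 65; 30; 62];
 [:: 66; 14; 62];
 [:: 66; 30; 46];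
 [:: 14; 31; 44; 61];
 [:: 15; 16; 42; 53];
 [:: 15; 17; 40; 54];
 [:: 15; 18; 41; 52];
 [:: 15; 19; 43; 55];
 [:: 15; 20; 34; 57];
 [:: 15; 21; 32; 58];
 [:: 15; 22; 33; 56];
 [:: 73; 15; 23];
 [:: 73; 35; 59];
 [:: 74; 15; 35];
 [:: 74; 23; 59];
 [:: 75; 15; 59];
 [:: 75; 23; 35];
 [:: 15; 24; 38; 49];
 [:: 15; 25; 36; 50];
 [:: 15; 26; 37; 48];
 [:: 70; 15; 27];
 [:: 70; 39; 51];
 [:: 71; 15; 39];
 [:: 71; 27; 51];
 [:: 72; 15; 51];
 [:: 72; 27; 39];
 [:: 15; 28; 46; 61];
 [:: 15; 29; 44; 62];
 [:: 15; 30; 45; 60];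
 [:: 64; 15; 31];
 [:: 64; 47; 63];
 [:: 65; 15; 47];
 [:: 65; 31; 63];
 [:: 66; 15; 63];
 [:: 66; 31; 47];
 [:: 16; 17; 18; 19];
 [:: 67; 16; 20];
 [:: 67; 24; 28];
 [:: 68; 16; 24];
 [:: 68; 20; 28];
 [:: 69; 16; 28];
 [:: 69; 20; 24];
 [:: 16; 21; 26; 31];
 [:: 16; 22; 27; 29];
 [:: 16; 23; 25; 30];
 [:: 17; 20; 27; 30];
 [:: 67; 17; 21];
 [:: 67; 25; 29];
 [:: 68; 17; 25];
 [:: 68; 21; 29];
 [:: 69; 17; 29];
 [:: 69; 21; 25];
 [:: 17; 22; 24; 31];
 [:: 17; 23; 26; 28];
 [:: 18; 20; 25; 31];
 [:: 18; 21; 27; 28];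
 [:: 67; 18; 22];
 [:: 67; 26; 30];
 [:: 68; 18; 26];
 [:: 68; 22; 30];
 [:: 69; 18; 30];
 [:: 69; 22; 26];
 [:: 18; 23; 24; 29];
 [:: 19; 20; 26; 29];
 [:: 19; 21; 24; 30];
 [:: 19; 22; 25; 28];
 [:: 67; 19; 23];
 [:: 67; 27; 31];
 [:: 68; 19; 27];
 [:: 68; 23; 31];
 [:: 69; 19; 31];
 [:: 69; 23; 27];
 [:: 20; 21; 22; 23];
 [:: 24; 25; 26; 27];
 [:: 28; 29; 30; 31];
 [:: 32; 33; 34; 35];
 [:: 67; 32; 36];
 [:: 67; 40; 44];
 [:: 68; 32; 40];
 [:: 68; 36; 44];
 [:: 69; 32; 44];
 [:: 69; 36; 40];
 [:: 32; 37; 42; 47];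
 [:: 32; 38; 43; 45];
 [:: 32; 39; 41; 46];
 [:: 33; 36; 43; 46];
 [:: 67; 33; 37];
 [:: 67; 41; 45];
 [:: 68; 33; 41];
 [:: 68; 37; 45];
 [:: 69; 33; 45];
 [:: 69; 37; 41];
 [:: 33; 38; 40; 47];
 [:: 33; 39; 42; 44];
 [:: 34; 36; 41; 47];
 [:: 34; 37; 43; 44];
 [:: 67; 34; 38];
 [:: 67; 42; 46];
 [:: 68; 34; 42];
 [:: 68; 38; 46];
 [:: 69; 34; 46];
 [:: 69; 38; 42];
 [:: 34; 39; 40; 45];
 [:: 35; 36; 42; 45];
 [:: 35; 37; 40; 46];
 [:: 35; 38; 41; 44];
 [:: 67; 35; 39];
 [:: 67; 43; 47];
 [:: 68; 35; 43];
 [:: 68; 39; 47];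
 [:: 69; 35; 47];
 [:: 69; 39; 43];
 [:: 36; 37; 38; 39];
 [:: 40; 41; 42; 43];
 [:: 44; 45; 46; 47];
 [:: 48; 49; 50; 51];
 [:: 67; 48; 52];
 [:: 67; 56; 60];
 [:: 68; 48; 56];
 [:: 68; 52; 60];
 [:: 69; 48; 60];
 [:: 69; 52; 56];
 [:: 48; 53; 58; 63];
 [:: 48; 54; 59; 61];
 [:: 48; 55; 57; 62];
 [:: 49; 52; 59; 62];
 [:: 67; 49; 53];
 [:: 67; 57; 61];
 [:: 68; 49; 57];
 [:: 68; 53; 61];
 [:: 69; 49; 61];
 [:: 69; 53; 57];
 [:: 49; 54; 56; 63];
 [:: 49; 55; 58; 60];
 [:: 50; 52; 57; 63];
 [:: 50; 53; 59; 60];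
 [:: 67; 50; 54];
 [:: 67; 58; 62];
 [:: 68; 50; 58];
 [:: 68; 54; 62];
 [:: 69; 50; 62];
 [:: 69; 54; 58];
 [:: 50; 55; 56; 61];
 [:: 51; 52; 58; 61];
 [:: 51; 53; 56; 62];
 [:: 51; 54; 57; 60];
 [:: 67; 51; 55];
 [:: 67; 59; 63];
 [:: 68; 51; 59];
 [:: 68; 55; 63];
 [:: 69; 51; 63];
 [:: 69; 55; 59];
 [:: 52; 53; 54; 55];
 [:: 56; 57; 58; 59];
 [:: 60; 61; 62; 63];
 [:: 64; 65; 66];
 [:: 67; 68; 69];
 [:: 70; 71; 72];
 [:: 73; 74; 75];
 [:: 64; 67; 70; 73];
 [:: 64; 68; 71; 75];
 [:: 64; 69; 72; 74];
 [:: 65; 67; 71; 74];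
 [:: 65; 68; 72; 73];
 [:: 65; 69; 70; 75];
 [:: 66; 67; 72; 75];
 [:: 66; 68; 70; 74];
 [:: 66; 69; 71; 73]].
Definition fl76 : seq (seq nat) := [:: [:: 0; 6; 11; 13; 17; 23; 26; 28; 34; 36; 41; 47; 51; 53; 56; 62];
 [:: 3; 6; 9; 12; 17; 20; 27; 30; 32; 37; 42; 47; 50; 55; 56; 61; 73; 74; 75];
 [:: 0; 5; 10; 15; 18; 23; 24; 29; 35; 38; 41; 44; 49; 52; 59; 62; 73; 74; 75];
 [:: 2; 4; 9; 15; 18; 20; 25; 31; 34; 36; 41; 47; 50; 52; 57; 63; 64; 65; 66];
 [:: 2; 6; 10; 14; 17; 21; 25; 29; 35; 39; 43; 47; 48; 52; 56; 60; 67; 68; 69];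
 [:: 0; 4; 8; 12; 18; 22; 26; 30; 35; 39; 43; 47; 49; 53; 57; 61; 67; 68; 69];
 [:: 2; 5; 11; 12; 19; 20; 26; 29; 32; 39; 41; 46; 49; 54; 56; 63; 73; 74; 75];
 [:: 0; 7; 9; 14; 16; 23; 25; 30; 32; 39; 41; 46; 48; 55; 57; 62; 64; 65; 66];
 [:: 0; 4; 8; 12; 19; 23; 27; 31; 33; 37; 41; 45; 50; 54; 58; 62; 67; 68; 69];
 [:: 8; 9; 10; 11; 24; 25; 26; 27; 40; 41; 42; 43; 56; 57; 58; 59; 64; 65; 66];
 [:: 3; 6; 9; 12; 16; 21; 26; 31; 34; 39; 40; 45; 49; 52; 59; 62];
 [:: 32; 33; 34; 35; 36; 37; 38; 39; 40; 41; 42; 43; 44; 45; 46; 47; 67; 68; 69];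
 [:: 1; 7; 10; 12; 18; 20; 25; 31; 32; 38; 43; 45; 51; 53; 56; 62; 73; 74; 75];
 [:: 1; 4; 11; 14; 16; 21; 26; 31; 35; 38; 41; 44; 50; 55; 56; 61; 70; 71; 72];
 [:: 48; 49; 50; 51; 52; 53; 54; 55; 56; 57; 58; 59; 60; 61; 62; 63; 67; 68; 69];
 [:: 2; 6; 10; 14; 18; 22; 26; 30; 34; 38; 42; 46; 50; 54; 58; 62; 64; 65; 66; 67; 68; 69; 70; 71; 72; 73; 74; 75];
 [:: 3; 6; 9; 12; 18; 23; 24; 29; 33; 36; 43; 46; 48; 53; 58; 63; 70; 71; 72];
 [:: 3; 7; 11; 15; 16; 20; 24; 28; 34; 38; 42; 46; 49; 53; 57; 61; 67; 68; 69];
 [:: 2; 7; 8; 13; 19; 22; 25; 28; 32; 37; 42; 47; 49; 52; 59; 62; 70; 71; 72];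
 [:: 0; 4; 8; 12; 17; 21; 25; 29; 34; 38; 42; 46; 51; 55; 59; 63; 67; 68; 69];
 [:: 0; 5; 10; 15; 17; 20; 27; 30; 34; 39; 40; 45; 51; 54; 57; 60; 70; 71; 72];
 [:: 3; 7; 11; 15; 18; 22; 26; 30; 33; 37; 41; 45; 48; 52; 56; 60; 67; 68; 69];
 [:: 1; 7; 10; 12; 17; 23; 26; 28; 33; 39; 42; 44; 49; 55; 58; 60; 64; 65; 66];
 [:: 3; 4; 10; 13; 19; 20; 26; 29; 35; 36; 42; 45; 51; 52; 58; 61; 64; 65; 66];
 [:: 1; 6; 8; 15; 19; 20; 26; 29; 34; 37; 43; 44; 48; 55; 57; 62];
 [:: 1; 6; 8; 15; 17; 22; 24; 31; 33; 38; 40; 47; 49; 54; 56; 63; 64; 65; 66];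
 [:: 0; 7; 9; 14; 18; 21; 27; 28; 35; 36; 42; 45; 49; 54; 56; 63];
 [:: 3; 5; 8; 14; 18; 20; 25; 31; 33; 39; 42; 44; 48; 54; 59; 61];
 [:: 8; 9; 10; 11; 16; 17; 18; 19; 36; 37; 38; 39; 60; 61; 62; 63; 73; 74; 75];
 [:: 4; 5; 6; 7; 20; 21; 22; 23; 36; 37; 38; 39; 52; 53; 54; 55; 64; 65; 66];
 [:: 0; 6; 11; 13; 19; 21; 24; 30; 33; 39; 42; 44; 50; 52; 57; 63; 73; 74; 75];
 [:: 0; 1; 2; 3; 24; 25; 26; 27; 44; 45; 46; 47; 52; 53; 54; 55; 73; 74; 75];
 [:: 0; 1; 2; 3; 28; 29; 30; 31; 36; 37; 38; 39; 56; 57; 58; 59];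
 [:: 12; 13; 14; 15; 20; 21; 22; 23; 32; 33; 34; 35; 56; 57; 58; 59; 73; 74; 75];
 [:: 2; 7; 8; 13; 18; 23; 24; 29; 34; 39; 40; 45; 50; 55; 56; 61; 64; 65; 66];
 [:: 0; 1; 2; 3];
 [:: 4; 5; 6; 7; 16; 17; 18; 19; 44; 45; 46; 47; 56; 57; 58; 59; 70; 71; 72];
 [:: 1; 6; 8; 15; 16; 23; 25; 30; 35; 36; 42; 45; 50; 53; 59; 60; 73; 74; 75];
 [:: 0; 6; 11; 13; 16; 22; 27; 29; 32; 38; 43; 45; 48; 54; 59; 61; 64; 65; 66];
 [:: 2; 7; 8; 13; 16; 21; 26; 31; 33; 36; 43; 46; 51; 54; 57; 60; 73; 74; 75];
 [:: 3; 5; 8; 14; 17; 23; 26; 28; 32; 38; 43; 45; 50; 52; 57; 63; 70; 71; 72];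
 [:: 1; 5; 9; 13; 16; 20; 24; 28; 35; 39; 43; 47; 50; 54; 58; 62; 67; 68; 69];
 [:: 3; 5; 8; 14; 19; 21; 24; 30; 35; 37; 40; 46; 51; 53; 56; 62; 64; 65; 66];
 [:: 4; 5; 6; 7; 28; 29; 30; 31; 40; 41; 42; 43; 48; 49; 50; 51; 73; 74; 75];
 [:: 2; 5; 11; 12; 16; 23; 25; 30; 33; 38; 40; 47; 51; 52; 58; 61];
 [:: 3; 4; 10; 13; 17; 22; 24; 31; 32; 39; 41; 46; 50; 53; 59; 60];
 [:: 2; 6; 10; 14; 16; 20; 24; 28; 33; 37; 41; 45; 51; 55; 59; 63; 67; 68; 69];
 [:: 0; 1; 2; 3; 4; 5; 6; 7; 8; 9; 10; 11; 12; 13; 14; 15; 67; 68; 69];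
 [:: 12; 13; 14; 15; 16; 17; 18; 19; 40; 41; 42; 43; 52; 53; 54; 55];
 [:: 0; 7; 9; 14; 19; 20; 26; 29; 33; 38; 40; 47; 50; 53; 59; 60; 70; 71; 72];
 [:: 4; 5; 6; 7; 24; 25; 26; 27; 32; 33; 34; 35; 60; 61; 62; 63];
 [:: 1; 7; 10; 12; 16; 22; 27; 29; 35; 37; 40; 46; 50; 52; 57; 63];
 [:: 1; 5; 9; 13; 18; 22; 26; 30; 32; 36; 40; 44; 51; 55; 59; 63; 67; 68; 69];
 [:: 12; 13; 14; 15; 28; 29; 30; 31; 44; 45; 46; 47; 60; 61; 62; 63; 64; 65; 66];
 [:: 1; 4; 11; 14; 17; 20; 27; 30; 33; 36; 43; 46; 49; 52; 59; 62; 64; 65; 66];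
 [:: 0; 4; 8; 12; 16; 20; 24; 28; 32; 36; 40; 44; 48; 52; 56; 60; 64; 65; 66; 67; 68; 69; 70; 71; 72; 73; 74; 75];
 [:: 1; 4; 11; 14; 18; 23; 24; 29; 32; 37; 42; 47; 51; 54; 57; 60];
 [:: 2; 4; 9; 15; 16; 22; 27; 29; 33; 39; 42; 44; 51; 53; 56; 62; 70; 71; 72];
 [:: 2; 4; 9; 15; 17; 23; 26; 28; 35; 37; 40; 46; 48; 54; 59; 61; 73; 74; 75];
 [:: 2; 6; 10; 14; 19; 23; 27; 31; 32; 36; 40; 44; 49; 53; 57; 61; 67; 68; 69];
 [:: 12; 13; 14; 15; 24; 25; 26; 27; 36; 37; 38; 39; 48; 49; 50; 51; 70; 71; 72];
 [:: 1; 4; 11; 14; 19; 22; 25; 28; 34; 39; 40; 45; 48; 53; 58; 63; 73; 74; 75];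
 [:: 0; 1; 2; 3; 20; 21; 22; 23; 40; 41; 42; 43; 60; 61; 62; 63; 70; 71; 72];
 [:: 8; 9; 10; 11; 28; 29; 30; 31; 32; 33; 34; 35; 52; 53; 54; 55; 70; 71; 72];
 [:: 0; 7; 9; 14; 17; 22; 24; 31; 34; 37; 43; 44; 51; 52; 58; 61; 73; 74; 75];
 [:: 1; 5; 9; 13; 17; 21; 25; 29; 33; 37; 41; 45; 49; 53; 57; 61; 64; 65; 66; 67; 68; 69; 70; 71; 72; 73; 74; 75];
 [:: 3; 4; 10; 13; 18; 21; 27; 28; 33; 38; 40; 47; 48; 55; 57; 62; 73; 74; 75];
 [:: 3; 5; 8; 14; 16; 22; 27; 29; 34; 36; 41; 47; 49; 55; 58; 60; 73; 74; 75];
 [:: 0; 5; 10; 15; 16; 21; 26; 31; 32; 37; 42; 47; 48; 53; 58; 63; 64; 65; 66];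
 [:: 2; 5; 11; 12; 18; 21; 27; 28; 34; 37; 43; 44; 50; 53; 59; 60; 64; 65; 66];
 [:: 3; 4; 10; 13; 16; 23; 25; 30; 34; 37; 43; 44; 49; 54; 56; 63; 70; 71; 72];
 [:: 3; 6; 9; 12; 19; 22; 25; 28; 35; 38; 41; 44; 51; 54; 57; 60; 64; 65; 66];
 [:: 8; 9; 10; 11; 20; 21; 22; 23; 44; 45; 46; 47; 48; 49; 50; 51];
 [:: 2; 7; 8; 13; 17; 20; 27; 30; 35; 38; 41; 44; 48; 53; 58; 63];
 [:: 0; 6; 11; 13; 18; 20; 25; 31; 35; 37; 40; 46; 49; 55; 58; 60; 70; 71; 72];
 [:: 3; 7; 11; 15; 17; 21; 25; 29; 32; 36; 40; 44; 50; 54; 58; 62; 67; 68; 69];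
 [:: 16; 17; 18; 19; 20; 21; 22; 23; 24; 25; 26; 27; 28; 29; 30; 31; 67; 68; 69];
 [:: 0; 5; 10; 15; 19; 22; 25; 28; 33; 36; 43; 46; 50; 55; 56; 61];
 [:: 1; 7; 10; 12; 19; 21; 24; 30; 34; 36; 41; 47; 48; 54; 59; 61; 70; 71; 72];
 [:: 3; 7; 11; 15; 19; 23; 27; 31; 35; 39; 43; 47; 51; 55; 59; 63; 64; 65; 66; 67; 68; 69; 70; 71; 72; 73; 74; 75];
 [:: 1; 5; 9; 13; 19; 23; 27; 31; 34; 38; 42; 46; 48; 52; 56; 60; 67; 68; 69];
 [:: 1; 6; 8; 15; 18; 21; 27; 28; 32; 39; 41; 46; 51; 52; 58; 61; 70; 71; 72];
 [:: 2; 4; 9; 15; 19; 21; 24; 30; 32; 38; 43; 45; 49; 55; 58; 60];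
 [:: 2; 5; 11; 12; 17; 22; 24; 31; 35; 36; 42; 45; 48; 55; 57; 62; 70; 71; 72];
 [:: 0; 1; 2; 3; 16; 17; 18; 19; 32; 33; 34; 35; 48; 49; 50; 51; 64; 65; 66]].
Definition s76 : seq nat := [:: 35; 3; 14; 26].
Definition k76 := 3.


Unset Implicit Arguments.

Theorem proposition3p6 :
  forall v : nat, v \in [:: 58; 66; 67; 76] ->
    exists B : {set {set 'I_v}}, is_PBD K34 B /\ has_dimension B 3.
Proof.
move=> v; rewrite !inE => /or4P[] /eqP ->.
- apply: (@sound 58 bl58 fl58 s58 k58); vm_compute; reflexivity.
- apply: (@sound 66 bl66 fl66 s66 k66); vm_compute; reflexivity.
- apply: (@sound 67 bl67 fl67 s67 k67); vm_compute; reflexivity.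
- apply: (@sound 76 bl76 fl76 s76 k76); vm_compute; reflexivity.
Qed.
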